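(* Let $0<p<\infty$, $0<\alpha<\infty$, and let $\beta$ be real with $\beta p<-1$ and $\nu:=-(\alpha+\beta+\frac1p)>0$. Let $K>1$ be sufficiently large, $\delta_n=K^{-n}$, $f_n(z)=\delta_n^\nu(1+\delta_n-z)^\beta$ ($z\in\mathbb{D}$), and $X_{\nu,\beta}=\{\sum_{n=1}^\infty a_nf_n:(a_n)\in\ell_\infty\}$. Then the map $\Phi:\ell_\infty\to X_{\nu,\beta}$, $\Phi((a_n))=\sum_{n=1}^\infty a_nf_n$, is an isomorphism between $\ell_\infty$ and $X_{\nu,\beta}$ endowed with the norm of $H(p,\infty,\alpha)$; that is, $X_{\nu,\beta}\subseteq H(p,\infty,\alpha)$, $\Phi$ is a linear bijection, and there are constants $c,C>0$ with $c\|{\bf a}\|_{\ell_\infty}\le\|\Phi{\bf a}\|_{p,\infty,\alpha}\le C\|{\bf a}\|_{\ell_\infty}$ for all ${\bf a}\in\ell_\infty$.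
   Context: $\mathbb{D}$ is the unit disk; powers use the principal branch. The series converges uniformly on compact subsets of $\mathbb{D}$. $M_p(r,f)=\left(\int_0^{2\pi}|f(re^{i\theta})|^p\frac{d\theta}{2\pi}\right)^{1/p}$; $H(p,\infty,\alpha)$ is the space of analytic $f$ on $\mathbb{D}$ with $\|f\|_{p,\infty,\alpha}=\sup_{0\le r<1}(1-r)^\alpha M_p(r,f)<\infty$. *)

(* Defs.v *)
From Stdlib Require Import Reals Lra.
From Coquelicot Require Import Coquelicot.
Open Scope R_scope.

(* Real power x^y for x >= 0, with the convention 0^y = 0 (y > 0 in uses). *)
Definition rpow (x y : R) : R := if Req_EM_T x 0 then 0 else Rpower x y.

(* Principal argument in (-PI, PI]. *)
Definition Arg (w : C) : R :=
  let x := fst w in let y := snd w in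
  if Rlt_dec 0 x then atan (y / x)
  else if Rlt_dec x 0 then
    (if Rle_dec 0 y then atan (y / x) + PI else atan (y / x) - PI)
  else if Rlt_dec 0 y then PI / 2
  else if Rlt_dec y 0 then - (PI / 2) else 0.

(* Principal branch w^b = exp(b (ln|w| + i Arg w)) for real b, w <> 0. *)
Definition Cpow (w : C) (b : R) : C :=
  if Ceq_dec w 0 then 0
  else let m := Rpower (Cmod w) b in let t := b * Arg w in (m * cos t, m * sin t).

Definition cis (t : R) : C := (cos t, sin t).

Definition in_disk (z : C) : Prop := Cmod z < 1.
Definition analytic_on_disk (f : C -> C) : Prop :=
  forall z : C, in_disk z -> @ex_derive C_AbsRing C_NormedModule f z.

Definition Mp (p r : R) (f : C -> C) : R :=
  rpow (RInt (fun t => rpow (Cmod (f (Cmult (RtoC r) (cis t)))) p) 0 (2 * PI) / (2 * PI)) (1 / p).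

Definition Hnorm (p alpha : R) (f : C -> C) : Rbar :=
  Lub_Rbar (fun x => exists r, 0 <= r < 1 /\ x = rpow (1 - r) alpha * Mp p r f).

Definition in_H (p alpha : R) (f : C -> C) : Prop :=
  analytic_on_disk f /\ is_finite (Hnorm p alpha f).

Definition bounded_seq (a : nat -> C) : Prop := exists M, forall n, Cmod (a n) <= M.
Definition linf_norm (a : nat -> C) : R := real (Lub_Rbar (fun x => exists n, x = Cmod (a n))).

Definition delta (K : R) (n : nat) : R := / (K ^ n).
Definition fn (K nu beta : R) (n : nat) (z : C) : C :=
  Cmult (RtoC (Rpower (delta K n) nu)) (Cpow (Cminus (RtoC (1 + delta K n)) z) beta).

(* The k-th term (k = 0,1,...) corresponds to the paper's index n = k+1:
   sequence a : nat -> C stands for (a_1, a_2, ...) with a_{k+1} = a k. *)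
Definition term (K nu beta : R) (a : nat -> C) (z : C) (k : nat) : C :=
  Cmult (a k) (fn K nu beta (S k) z).

Definition Phi (K nu beta : R) (a : nat -> C) (z : C) : C :=
  (Series (fun k => fst (term K nu beta a z k)), Series (fun k => snd (term K nu beta a z k))).

(* Main.v *)
Require Import Defs.
From Stdlib Require Import Reals.
From Coquelicot Require Import Coquelicot.
From Stdlib Require Import Lra Lia Classical.
Open Scope R_scope.

Definition EE (b x y : R) := Rpower (sqrt (x^2 + y^2)) b.
Definition P1 (b x y : R) := EE b x y * cos (b * atan (y / x)).
Definition P2 (b x y : R) := EE b x y * sin (b * atan (y / x)).

Lemma EE_pos b x y : 0 < EE b x y.
Proof. unfold EE, Rpower. apply exp_pos. Qed.

Lemma Cpow_pos (w : C) b : 0 < fst w ->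
  Defs.Cpow w b = (P1 b (fst w) (snd w), P2 b (fst w) (snd w)).
Proof.
  intros H. unfold Defs.Cpow, P1, P2, EE, Arg.
  destruct (Ceq_dec w 0) as [e|e].
  { subst w. simpl in H. lra. }
  destruct (Rlt_dec 0 (fst w)); [|lra].
  unfold Cmod. reflexivity.
Qed.

Lemma Cmod_Cpow (w : C) (b : R) : w <> 0 -> Cmod (Defs.Cpow w b) = Rpower (Cmod w) b.
Proof.
  intros H. unfold Defs.Cpow. destruct (Ceq_dec w 0) as [e|e]. { exfalso. apply H. exact e. }
  unfold Cmod at 1. cbn [fst snd].
  set (m := Rpower (Cmod w) b). set (t := b * Arg w).
  replace ((m * cos t) ^ 2 + (m * sin t) ^ 2) with (m ^ 2 * ((sin t)^2 + (cos t)^2)) by ring.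
  rewrite <- !Rsqr_pow2, sin2_cos2, Rmult_1_r, Rsqr_pow2.
  apply sqrt_pow2. unfold m, Rpower. left; apply exp_pos.
Qed.


Lemma sqrt_atan_aux x y : 0 < x -> sqrt (1 + (y/x)²) = sqrt (x^2+y^2) / x.
Proof.
  intros Hx. replace (1 + (y/x)²) with ((x^2+y^2)/(x*x)) by (unfold Rsqr; field; lra).
  rewrite sqrt_div_alt by nra. rewrite sqrt_square by lra. reflexivity.
Qed.

Lemma trig_aux x y : 0 < x ->
  cos (atan (y/x)) * sqrt (x^2+y^2) = x /\ sin (atan (y/x)) * sqrt (x^2+y^2) = y.
Proof.
  intros Hx. assert (0 < sqrt (x^2+y^2)).
  { apply sqrt_lt_R0. assert (0 < x^2) by (apply pow_lt; lra).
    assert (0 <= y^2) by apply pow2_ge_0. lra. }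
  rewrite cos_atan, sin_atan, sqrt_atan_aux by lra. split; field; lra.
Qed.

Lemma EE_shift b x y : 0 < x -> EE (b-1) x y * sqrt (x^2+y^2) = EE b x y.
Proof.
  intros Hx. assert (0 < sqrt (x^2+y^2)).
  { apply sqrt_lt_R0. assert (0 < x^2) by (apply pow_lt; lra).
    assert (0 <= y^2) by apply pow2_ge_0. lra. }
  unfold EE, Rpower. rewrite <- (exp_ln (sqrt (x^2+y^2))) at 2 by lra.
  rewrite <- exp_plus. f_equal. ring.
Qed.

Lemma dP12 b x0 y0 ux uy s : 0 < x0 + s * ux ->
  is_derive (fun s => P1 b (x0 + s*ux) (y0 + s*uy)) s
    (b * (P1 (b-1) (x0 + s*ux) (y0 + s*uy) * ux - P2 (b-1) (x0 + s*ux) (y0 + s*uy) * uy)) /\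
  is_derive (fun s => P2 b (x0 + s*ux) (y0 + s*uy)) s
    (b * (P2 (b-1) (x0 + s*ux) (y0 + s*uy) * ux + P1 (b-1) (x0 + s*ux) (y0 + s*uy) * uy)).
Proof.
  intros Hx.
  destruct (trig_aux (x0 + s*ux) (y0 + s*uy) Hx) as [Hc Hs].
  pose proof (EE_shift b _ (y0 + s*uy) Hx) as HE.
  assert (Hq : 0 < (x0 + s*ux)^2 + (y0 + s*uy)^2) by (assert (0 < (x0 + s*ux)^2) by (apply pow_lt; lra); assert (0 <= (y0 + s*uy)^2) by apply pow2_ge_0; lra).
  assert (Hr : 0 < sqrt ((x0 + s*ux)^2 + (y0 + s*uy)^2)) by (apply sqrt_lt_R0; lra).
  assert (Hr2 := sqrt_sqrt ((x0 + s*ux)^2 + (y0 + s*uy)^2) (Rlt_le _ _ Hq)).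
  unfold P1, P2.
  set (th := atan ((y0 + s * uy) / (x0 + s * ux))) in *.
  assert (Hcm : cos ((b-1) * th) = cos (b*th) * cos th + sin (b*th) * sin th).
  { replace ((b-1)*th) with (b*th - th) by ring. apply cos_minus. }
  assert (Hsm : sin ((b-1) * th) = sin (b*th) * cos th - cos (b*th) * sin th).
  { replace ((b-1)*th) with (b*th - th) by ring. apply sin_minus. }
  rewrite Hcm, Hsm.
  unfold EE in HE. unfold Rpower in HE.
  set (X := x0 + s*ux) in *. set (Y := y0 + s*uy) in *.
  set (R := sqrt (X^2+Y^2)) in *.
  assert (HX : X <> 0) by lra.
  assert (Hth : (uy / X + Y * (- ux / (X*X))) * / (1 + Y / X * (Y / X)) = (X*uy - Y*ux) / (R*R)).
  { replace (1 + Y / X * (Y / X)) with ((R*R)/(X*X)) by (rewrite Hr2; field; exact HX).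
    field. split; lra. }
  split.
  - unfold EE. unfold Rpower. auto_derive.
    + fold X Y. replace (X*(X*1)+Y*(Y*1)) with (X^2+Y^2) by ring. fold R. repeat split; lra.
    + fold X Y. replace (X*(X*1)+Y*(Y*1)) with (X^2+Y^2) by ring. fold R.
      change (atan (Y * / X)) with th.
      rewrite <- HE.
      set (e1 := exp ((b-1) * ln R)).
      replace (1 * uy * / X + Y * (- (1 * ux) * / (X * X))) with (uy / X + Y * (- ux / (X*X))) by (unfold Rdiv; ring).
      replace (1 + Y * / X * (Y * / X * 1)) with (1 + Y / X * (Y / X)) by (unfold Rdiv; ring).
      rewrite Hth. rewrite <- Hc, <- Hs. field. lra.
  - unfold EE. unfold Rpower. auto_derive.
    + fold X Y. replace (X*(X*1)+Y*(Y*1)) with (X^2+Y^2) by ring. fold R. repeat split; lra.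
    + fold X Y. replace (X*(X*1)+Y*(Y*1)) with (X^2+Y^2) by ring. fold R.
      change (atan (Y * / X)) with th.
      rewrite <- HE.
      set (e1 := exp ((b-1) * ln R)).
      replace (1 * uy * / X + Y * (- (1 * ux) * / (X * X))) with (uy / X + Y * (- ux / (X*X))) by (unfold Rdiv; ring).
      replace (1 + Y * / X * (Y * / X * 1)) with (1 + Y / X * (Y / X)) by (unfold Rdiv; ring).
      rewrite Hth. rewrite <- Hc, <- Hs. field. lra.
Qed.

Lemma derive_cont (f : R -> R) x l : is_derive f x l -> continuity_pt f x.
Proof.
  intros H. apply continuity_pt_filterlim. apply (ex_derive_continuous (K:=R_AbsRing) f x).
  exists l. exact H.
Qed.

Lemma taylor1 (g d dd : R -> R) B :
  (forall s, 0 <= s <= 1 -> is_derive g s (d s)) ->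
  (forall s, 0 <= s <= 1 -> is_derive d s (dd s)) ->
  (forall s, 0 <= s <= 1 -> Rabs (dd s) <= B) ->
  Rabs (g 1 - g 0 - d 0) <= B.
Proof.
  intros Hg Hd HB.
  assert (B0 : 0 <= B) by (eapply Rle_trans; [apply Rabs_pos| apply (HB 0); lra]).
  destruct (MVT_gen (fun s => g s - s * d 0) 0 1 (fun s => d s - d 0)) as [c [Hc Hc2]].
  - intros x Hx. rewrite Rmin_left, Rmax_right in Hx by lra.
    replace (d x - d 0) with (d x - 1 * d 0) by ring.
    apply (is_derive_minus (V:=R_NormedModule)). apply Hg; lra.
    apply (is_derive_scal_l (fun s => s) x 1 (d 0)).
    apply (is_derive_id (K:=R_AbsRing)).
  - intros x Hx. rewrite Rmin_left, Rmax_right in Hx by lra.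
    apply continuity_pt_minus. apply (derive_cont g x (d x)). apply Hg; lra.
    apply continuity_pt_mult. apply continuity_pt_id. apply continuity_pt_const. intros a b; reflexivity.
  - rewrite Rmin_left, Rmax_right in Hc by lra.
    destruct (MVT_gen d 0 c dd) as [e [He He2]].
    + intros x Hx. apply Hd. unfold Rmin, Rmax in Hx. destruct (Rle_dec 0 c); lra.
    + intros x Hx. apply (derive_cont d x (dd x)). apply Hd. unfold Rmin, Rmax in Hx. destruct (Rle_dec 0 c); lra.
    + replace (g 1 - g 0 - d 0) with ((g 1 - 1 * d 0) - (g 0 - 0 * d 0)) by ring.
      rewrite Hc2, He2.
      assert (e01 : 0 <= e <= 1) by (unfold Rmin, Rmax in He; destruct (Rle_dec 0 c); lra).
      specialize (HB e e01).
      replace (dd e * (c - 0) * (1 - 0)) with (dd e * c) by ring. rewrite Rabs_mult, (Rabs_right c) by lra. pose proof (Rabs_pos (dd e)).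
      nra.
Qed.

Lemma exp_le_mono x y : x <= y -> exp x <= exp y.
Proof. intros H. destruct (Req_dec x y). subst; lra. left; apply exp_increasing; lra. Qed.

Lemma ln_le_mono x y : 0 < x -> x <= y -> ln x <= ln y.
Proof. intros H0 H. destruct (Req_dec x y). subst; lra. left; apply ln_increasing; lra. Qed.

Lemma Rpower_le_neg a0 a c : 0 < a0 -> a0 <= a -> c <= 0 -> Rpower a c <= Rpower a0 c.
Proof.
  intros H1 H2 H3. unfold Rpower. apply exp_le_mono.
  assert (ln a0 <= ln a) by (apply ln_le_mono; lra). nra.
Qed.

Lemma sqrt_ge_x x y : 0 <= x -> x <= sqrt (x^2 + y^2).
Proof.
  intros Hx. rewrite <- (sqrt_pow2 x Hx) at 1. apply sqrt_le_1_alt.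
  assert (0 <= y^2) by apply pow2_ge_0. lra.
Qed.

Lemma EE_bound c x y r : 0 < r -> r <= x -> c <= 0 -> EE c x y <= Rpower r c.
Proof.
  intros Hr Hx Hc. unfold EE. apply Rpower_le_neg; auto.
  eapply Rle_trans; [exact Hx| apply sqrt_ge_x; lra].
Qed.

Lemma P1_bound c x y : Rabs (P1 c x y) <= EE c x y.
Proof.
  unfold P1. rewrite Rabs_mult, (Rabs_right (EE c x y)) by (left; apply EE_pos).
  pose proof (EE_pos c x y). pose proof (COS_bound (c * atan (y/x))).
  assert (Rabs (cos (c * atan (y / x))) <= 1) by (apply Rabs_le; lra). nra.
Qed.

Lemma P2_bound c x y : Rabs (P2 c x y) <= EE c x y.
Proof.
  unfold P2. rewrite Rabs_mult, (Rabs_right (EE c x y)) by (left; apply EE_pos).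
  pose proof (EE_pos c x y). pose proof (SIN_bound (c * atan (y/x))).
  assert (Rabs (sin (c * atan (y / x))) <= 1) by (apply Rabs_le; lra). nra.
Qed.

Lemma Cmod_le_abs (v : C) : Cmod v <= Rabs (fst v) + Rabs (snd v).
Proof.
  unfold Cmod. rewrite <- (sqrt_pow2 (Rabs (fst v) + Rabs (snd v))) by (pose proof (Rabs_pos (fst v)); pose proof (Rabs_pos (snd v)); lra).
  apply sqrt_le_1_alt.
  pose proof (Rabs_pos (fst v)); pose proof (Rabs_pos (snd v)).
  rewrite <- (pow2_abs (fst v)), <- (pow2_abs (snd v)). nra.
Qed.

Lemma abs_fst_le (v : C) : Rabs (fst v) <= Cmod v.
Proof. apply (re_le_Cmod v). Qed.

Lemma abs_snd_le (v : C) : Rabs (snd v) <= Cmod v.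
Proof.
  unfold Cmod. rewrite <- (sqrt_pow2 (Rabs (snd v))) by apply Rabs_pos.
  apply sqrt_le_1_alt. rewrite pow2_abs. pose proof (pow2_ge_0 (fst v)). lra.
Qed.

Lemma Rabs_minus_le a b : Rabs (a - b) <= Rabs a + Rabs b.
Proof. unfold Rminus. eapply Rle_trans. apply Rabs_triang. rewrite Rabs_Ropp. lra. Qed.

Lemma bound4 p1 p2 a b E : Rabs p1 <= E -> Rabs p2 <= E ->
  Rabs ((p1 * a - p2 * b) * a - (p2 * a + p1 * b) * b) <= E * (Rabs a + Rabs b)^2.
Proof.
  intros H1 H2.
  eapply Rle_trans. apply Rabs_minus_le.
  rewrite !Rabs_mult.
  assert (Q1 : Rabs (p1 * a - p2 * b) <= Rabs p1 * Rabs a + Rabs p2 * Rabs b)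
    by (eapply Rle_trans; [apply Rabs_minus_le| rewrite !Rabs_mult; lra]).
  assert (Q2 : Rabs (p2 * a + p1 * b) <= Rabs p2 * Rabs a + Rabs p1 * Rabs b)
    by (eapply Rle_trans; [apply Rabs_triang| rewrite !Rabs_mult; lra]).
  pose proof (Rabs_pos a). pose proof (Rabs_pos b). pose proof (Rabs_pos p1). pose proof (Rabs_pos p2).
  set (A := Rabs a) in *. set (B := Rabs b) in *. set (P := Rabs p1) in *. set (Q := Rabs p2) in *.
  assert (0 <= (E - P) * (A*A+B*B)) by (apply Rmult_le_pos; nra).
  assert (0 <= (E - Q) * (A*B)) by (apply Rmult_le_pos; nra).
  assert (Rabs (p1 * a - p2 * b) * A <= (P * A + Q * B) * A) by (apply Rmult_le_compat_r; lra).
  assert (Rabs (p2 * a + p1 * b) * B <= (Q * A + P * B) * B) by (apply Rmult_le_compat_r; lra).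
  nra.
Qed.

Lemma bound4' p1 p2 a b E : Rabs p1 <= E -> Rabs p2 <= E ->
  Rabs ((p2 * a + p1 * b) * a + (p1 * a - p2 * b) * b) <= E * (Rabs a + Rabs b)^2.
Proof.
  intros H1 H2.
  replace ((p2 * a + p1 * b) * a + (p1 * a - p2 * b) * b) with ((p2 * a - (-p1) * b) * a - (-p1 * a + p2 * b) * b) by ring.
  apply bound4; auto. rewrite Rabs_Ropp; auto.
Qed.

Lemma is_derive_lin (f g : R->R) df dg s b ux uy: is_derive f s df -> is_derive g s dg ->
  is_derive (fun s => b * (f s * ux - g s * uy)) s (b * (df * ux - dg * uy)).
Proof. intros Hf Hg.
apply (is_derive_scal (fun s => f s * ux - g s * uy) s b).
apply (is_derive_minus (fun s => f s * ux) (fun s => g s * uy)).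
apply (is_derive_scal_l f s df ux Hf).
apply (is_derive_scal_l g s dg uy Hg).
Qed.

Lemma is_derive_linp (f g : R->R) df dg s b ux uy: is_derive f s df -> is_derive g s dg ->
  is_derive (fun s => b * (f s * ux + g s * uy)) s (b * (df * ux + dg * uy)).
Proof. intros Hf Hg.
apply (is_derive_scal (fun s => f s * ux + g s * uy) s b).
apply (is_derive_plus (fun s => f s * ux) (fun s => g s * uy)).
apply (is_derive_scal_l f s df ux Hf).
apply (is_derive_scal_l g s dg uy Hg).
Qed.

Lemma taylorC (b rho : R) (w u : C) : b <= 0 -> 0 < rho -> rho <= fst w -> Cmod u <= rho / 2 ->
  Cmod (Cminus (Cminus (Defs.Cpow (Cplus w u) b) (Defs.Cpow w b))
               (Cmult (Cmult (RtoC b) (Defs.Cpow w (b-1))) u))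
  <= 4 * Rabs (b * (b-1)) * Rpower (rho/2) (b-1-1) * (Cmod u)^2.
Proof.
  intros Hb Hrho Hw Hu.
  destruct w as [x0 y0]. destruct u as [ux uy]. cbn [fst snd] in *.
  pose proof (abs_fst_le (ux,uy)) as Hux. pose proof (abs_snd_le (ux,uy)) as Huy.
  cbn [fst snd] in Hux, Huy.
  assert (Hpos : forall s, 0 <= s <= 1 -> rho/2 <= x0 + s * ux).
  { intros s Hs. assert (Rabs (s*ux) <= rho/2).
    { rewrite Rabs_mult, (Rabs_right s) by lra. nra. }
    apply Rabs_le_between in H. lra. }
  set (D := Rabs (b * (b-1)) * Rpower (rho/2) (b-1-1) * (Rabs ux + Rabs uy)^2).
  assert (HD1 : Rabs (P1 b (x0 + 1*ux) (y0 + 1*uy) - P1 b (x0 + 0*ux) (y0 + 0*uy) -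
                      (b * (P1 (b-1) (x0 + 0*ux) (y0 + 0*uy) * ux - P2 (b-1) (x0 + 0*ux) (y0 + 0*uy) * uy))) <= D).
  { apply (taylor1 (fun s => P1 b (x0 + s*ux) (y0 + s*uy))
      (fun s => b * (P1 (b-1) (x0 + s*ux) (y0 + s*uy) * ux - P2 (b-1) (x0 + s*ux) (y0 + s*uy) * uy))
      (fun s => b * ((b-1) * (P1 (b-1-1) (x0 + s*ux) (y0 + s*uy) * ux - P2 (b-1-1) (x0 + s*ux) (y0 + s*uy) * uy) * ux
                 - (b-1) * (P2 (b-1-1) (x0 + s*ux) (y0 + s*uy) * ux + P1 (b-1-1) (x0 + s*ux) (y0 + s*uy) * uy) * uy))).
    - intros s Hs. apply (dP12 b x0 y0 ux uy s). specialize (Hpos s Hs). lra.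
    - intros s Hs. assert (0 < x0 + s*ux) by (specialize (Hpos s Hs); lra).
      destruct (dP12 (b-1) x0 y0 ux uy s H) as [H1 H2].
      apply (is_derive_lin _ _ _ _ s b ux uy H1 H2).
    - intros s Hs. unfold D.
      set (X := x0 + s*ux). set (Y := y0 + s*uy).
      assert (HE : EE (b-1-1) X Y <= Rpower (rho/2) (b-1-1)) by (apply EE_bound; [lra| apply Hpos; lra| lra]).
      pose proof (P1_bound (b-1-1) X Y). pose proof (P2_bound (b-1-1) X Y).
      set (p1 := P1 (b-1-1) X Y) in *. set (p2 := P2 (b-1-1) X Y) in *.
      set (E := EE (b-1-1) X Y) in *.
      replace (b * ((b - 1) * (p1 * ux - p2 * uy) * ux - (b - 1) * (p2 * ux + p1 * uy) * uy))
        with ((b * (b-1)) * ((p1 * ux - p2 * uy) * ux - (p2 * ux + p1 * uy) * uy)) by ring.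
      rewrite Rabs_mult, Rmult_assoc. apply Rmult_le_compat_l. apply Rabs_pos.
      eapply Rle_trans. apply bound4; eassumption.
      apply Rmult_le_compat_r. apply pow2_ge_0. exact HE.
  }
  assert (HD2 : Rabs (P2 b (x0 + 1*ux) (y0 + 1*uy) - P2 b (x0 + 0*ux) (y0 + 0*uy) -
                      (b * (P2 (b-1) (x0 + 0*ux) (y0 + 0*uy) * ux + P1 (b-1) (x0 + 0*ux) (y0 + 0*uy) * uy))) <= D).
  { apply (taylor1 (fun s => P2 b (x0 + s*ux) (y0 + s*uy))
      (fun s => b * (P2 (b-1) (x0 + s*ux) (y0 + s*uy) * ux + P1 (b-1) (x0 + s*ux) (y0 + s*uy) * uy))
      (fun s => b * ((b-1) * (P2 (b-1-1) (x0 + s*ux) (y0 + s*uy) * ux + P1 (b-1-1) (x0 + s*ux) (y0 + s*uy) * uy) * ux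
                 + (b-1) * (P1 (b-1-1) (x0 + s*ux) (y0 + s*uy) * ux - P2 (b-1-1) (x0 + s*ux) (y0 + s*uy) * uy) * uy))).
    - intros s Hs. apply (dP12 b x0 y0 ux uy s). specialize (Hpos s Hs). lra.
    - intros s Hs. assert (0 < x0 + s*ux) by (specialize (Hpos s Hs); lra).
      destruct (dP12 (b-1) x0 y0 ux uy s H) as [H1 H2].
      apply (is_derive_linp _ _ _ _ s b ux uy H2 H1).
    - intros s Hs. unfold D.
      set (X := x0 + s*ux). set (Y := y0 + s*uy).
      assert (HE : EE (b-1-1) X Y <= Rpower (rho/2) (b-1-1)) by (apply EE_bound; [lra| apply Hpos; lra| lra]).
      pose proof (P1_bound (b-1-1) X Y). pose proof (P2_bound (b-1-1) X Y).
      set (p1 := P1 (b-1-1) X Y) in *. set (p2 := P2 (b-1-1) X Y) in *.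
      set (E := EE (b-1-1) X Y) in *.
      replace (b * ((b - 1) * (p2 * ux + p1 * uy) * ux + (b - 1) * (p1 * ux - p2 * uy) * uy))
        with ((b * (b-1)) * ((p2 * ux + p1 * uy) * ux + (p1 * ux - p2 * uy) * uy)) by ring.
      rewrite Rabs_mult, Rmult_assoc. apply Rmult_le_compat_l. apply Rabs_pos.
      eapply Rle_trans. apply bound4'; eassumption.
      apply Rmult_le_compat_r. apply pow2_ge_0. exact HE.
  }
  assert (Hx1 : 0 < fst ((x0, y0) + (ux, uy))%C) by (cbn; specialize (Hpos 1); lra).
  assert (Hx0 : 0 < fst (x0, y0)) by (cbn; lra).
  rewrite (Cpow_pos _ b Hx1), (Cpow_pos _ b Hx0), (Cpow_pos _ (b-1) Hx0).
  eapply Rle_trans. apply Cmod_le_abs.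
  replace (x0 + 1*ux) with (x0 + ux) in HD1, HD2 by ring.
  replace (y0 + 1*uy) with (y0 + uy) in HD1, HD2 by ring.
  replace (x0 + 0*ux) with x0 in HD1, HD2 by ring.
  replace (y0 + 0*uy) with y0 in HD1, HD2 by ring.
  cbn [fst snd Cplus Cminus Cmult Copp RtoC].
  match goal with |- Rabs ?ea + Rabs ?eb <= _ =>
    replace ea with (P1 b (x0 + ux) (y0 + uy) - P1 b x0 y0 - b * (P1 (b - 1) x0 y0 * ux - P2 (b - 1) x0 y0 * uy)) by ring;
    replace eb with (P2 b (x0 + ux) (y0 + uy) - P2 b x0 y0 - b * (P2 (b - 1) x0 y0 * ux + P1 (b - 1) x0 y0 * uy)) by ring
  end.
  assert (HC : (Rabs ux + Rabs uy)^2 <= 2 * Cmod (ux, uy) ^ 2).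
  { rewrite Cmod2_alt. cbn [Re Im fst snd].
    rewrite <- (pow2_abs ux), <- (pow2_abs uy).
    pose proof (pow2_ge_0 (Rabs ux - Rabs uy)). nra. }
  assert (0 <= Rabs (b * (b-1)) * Rpower (rho/2) (b-1-1)).
  { apply Rmult_le_pos. apply Rabs_pos. unfold Rpower; left; apply exp_pos. }
  unfold D in HD1, HD2.
  assert (Rabs (b * (b - 1)) * Rpower (rho / 2) (b - 1 - 1) * (Rabs ux + Rabs uy) ^ 2 <=
          Rabs (b * (b - 1)) * Rpower (rho / 2) (b - 1 - 1) * (2 * Cmod (ux, uy) ^ 2))
    by (apply Rmult_le_compat_l; auto).
  lra.
Qed.

Lemma sum_n_fst (a : nat -> C) n : fst (sum_n a n) = sum_n (fun k => fst (a k)) n.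
Proof.
  induction n. rewrite !sum_O. reflexivity.
  rewrite !sum_Sn. rewrite <- IHn. reflexivity.
Qed.

Lemma sum_n_snd (a : nat -> C) n : snd (sum_n a n) = sum_n (fun k => snd (a k)) n.
Proof.
  induction n. rewrite !sum_O. reflexivity.
  rewrite !sum_Sn. rewrite <- IHn. reflexivity.
Qed.

Lemma is_series_C_fst (a : nat -> C) l : is_series a l -> is_series (fun n => fst (a n)) (fst l).
Proof.
  unfold is_series. intros H. apply filterlim_locally. intros eps.
  generalize (proj1 (filterlim_locally _ _) H eps). apply filter_imp. intros n [H1 H2].
  rewrite <- sum_n_fst. exact H1.
Qed.

Lemma is_series_C_snd (a : nat -> C) l : is_series a l -> is_series (fun n => snd (a n)) (snd l).
Proof.
  unfold is_series. intros H. apply filterlim_locally. intros eps.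
  generalize (proj1 (filterlim_locally _ _) H eps). apply filter_imp. intros n [H1 H2].
  rewrite <- sum_n_snd. exact H2.
Qed.

Lemma is_series_C_pair (a : nat -> C) l : is_series a l ->
  (Series (fun n => fst (a n)), Series (fun n => snd (a n))) = l.
Proof.
  intros H. destruct l as [l1 l2].
  rewrite (is_series_unique _ _ (is_series_C_fst a _ H)).
  rewrite (is_series_unique _ _ (is_series_C_snd a _ H)). reflexivity.
Qed.

Lemma series_norm_le (a : nat -> C) (b : nat -> R) l lb :
  is_series a l -> is_series b lb -> (forall n, Cmod (a n) <= b n) -> Cmod l <= lb.
Proof.
  intros Ha Hb Hab.
  assert (H : forall n, Cmod (sum_n a n) <= sum_n b n).
  { intros n. unfold sum_n. change (Cmod (sum_n_m a 0 n)) with (@norm C_AbsRing C_NormedModule (sum_n_m a 0 n)).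
    eapply Rle_trans. apply (norm_sum_n_m (K:=C_AbsRing) (V:=C_NormedModule)).
    apply sum_n_m_le. intros k. apply Hab. }
  assert (L1 : is_lim_seq (fun n => Cmod (sum_n a n)) (Cmod l)).
  { unfold is_lim_seq. simpl.
    change (Cmod l) with (@norm C_AbsRing C_NormedModule l).
    eapply filterlim_comp. exact Ha. apply (filterlim_norm (K:=C_AbsRing) (V:=C_NormedModule)). }
  assert (L2 : is_lim_seq (sum_n b) lb) by exact Hb.
  pose proof (is_lim_seq_le _ _ _ _ H L1 L2). simpl in H0. exact H0.
Qed.

Lemma delta_pos K n : 0 < K -> 0 < delta K n.
Proof. intros HK. unfold delta. apply Rinv_0_lt_compat, pow_lt, HK. Qed.

Lemma Rpower_delta K n c : 0 < K -> Rpower (delta K n) c = (Rpower (/K) c)^n.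
Proof.
  intros HK. unfold delta. rewrite <- pow_inv.
  assert (0 < /K) by (apply Rinv_0_lt_compat; lra).
  rewrite <- (Rpower_pow n (/K)) by auto. rewrite Rpower_mult.
  rewrite <- Rpower_pow by (unfold Rpower; apply exp_pos). rewrite Rpower_mult. f_equal. ring.
Qed.

Lemma q_lt1 K c : 1 < K -> 0 < c -> 0 < Rpower (/K) c < 1.
Proof.
  intros HK Hc. split. unfold Rpower; apply exp_pos.
  unfold Rpower. rewrite <- exp_0. apply exp_increasing.
  assert (ln (/K) < 0). { rewrite <- ln_1. apply ln_increasing. apply Rinv_0_lt_compat; lra.
    rewrite <- Rinv_1. apply Rinv_lt_contravar; lra. }
  nra.
Qed.

Lemma w_fst_lb K n (z : C) : 0 < K -> fst (Cminus (RtoC (1 + delta K n)) z) >= 1 + delta K n - Cmod z.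
Proof.
  intros HK. cbn. pose proof (re_le_Cmod z). unfold Re in H. apply Rabs_le_between in H. lra.
Qed.

Lemma Cmod_ge_fst (w : C) : fst w <= Cmod w.
Proof. pose proof (re_le_Cmod w). unfold Re in H. apply Rabs_le_between in H. lra. Qed.

Lemma Cmod_fn K nu beta n (z : C) : 0 < K -> Cmod z < 1 + delta K n ->
  Cmod (fn K nu beta n z) = Rpower (delta K n) nu * Rpower (Cmod (Cminus (RtoC (1 + delta K n)) z)) beta.
Proof.
  intros HK Hz. unfold fn. rewrite Cmod_mult, Cmod_R, Rabs_right by (left; unfold Rpower; apply exp_pos).
  f_equal. apply Cmod_Cpow. intros E. pose proof (w_fst_lb K n z HK). rewrite E in H. simpl in H. lra.
Qed.

Lemma Cmod_fn_le K nu beta n (z : C) L : 0 < K -> beta <= 0 -> 0 < L ->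
  L <= Cmod (Cminus (RtoC (1 + delta K n)) z) -> Cmod z < 1 + delta K n ->
  Cmod (fn K nu beta n z) <= Rpower (delta K n) nu * Rpower L beta.
Proof.
  intros HK Hb HL HLw Hz. rewrite Cmod_fn by auto. apply Rmult_le_compat_l.
  left; unfold Rpower; apply exp_pos. apply Rpower_le_neg; auto.
Qed.

Lemma bounded_M (a : nat -> C) : bounded_seq a -> exists M, 0 <= M /\ forall n, Cmod (a n) <= M.
Proof.
  intros [M HM]. exists M. split; auto. eapply Rle_trans. apply Cmod_ge_0. apply (HM 0%nat).
Qed.

Lemma geom_series_S q c : Rabs q < 1 -> is_series (fun k => c * q^(S k)) (c * (q / (1 - q))).
Proof.
  intros Hq. pose proof (is_series_geom q Hq).
  pose proof (is_series_scal_l (c * q) _ _ H) as H2.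
  assert (1 - q <> 0) by (apply Rabs_def2 in Hq; lra).
  replace (c * (q / (1 - q))) with (c*q*/(1-q)) by (field; auto).
  eapply is_series_ext; [|exact H2].
  intros n. simpl. change (scal (c*q) (q^n)) with (c*q*q^n). ring.
Qed.

Lemma term_series K nu beta a (z : C) : 1 < K -> 0 < nu -> beta <= 0 -> bounded_seq a -> Cmod z < 1 ->
  is_series (term K nu beta a z) (Phi K nu beta a z).
Proof.
  intros HK Hnu Hb Ha Hz. destruct (bounded_M a Ha) as [M [HM0 HM]].
  set (q := Rpower (/K) nu). pose proof (q_lt1 K nu HK Hnu) as Hq. fold q in Hq.
  assert (Hb1 : forall k, Cmod (term K nu beta a z k) <= (M * Rpower (1 - Cmod z) beta) * q^(S k)).
  { intros k. unfold term. rewrite Cmod_mult.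
    assert (Cmod (fn K nu beta (S k) z) <= Rpower (delta K (S k)) nu * Rpower (1 - Cmod z) beta).
    { apply Cmod_fn_le; try lra.
      pose proof (w_fst_lb K (S k) z ltac:(lra)). pose proof (delta_pos K (S k) ltac:(lra)).
      pose proof (Cmod_ge_fst (Cminus (RtoC (1 + delta K (S k))) z)). lra.
      pose proof (delta_pos K (S k) ltac:(lra)). lra. }
    rewrite Rpower_delta in H by lra. fold q in H.
    pose proof (Cmod_ge_0 (fn K nu beta (S k) z)).
    replace (M * Rpower (1 - Cmod z) beta * q ^ S k) with (M * (q ^ S k * Rpower (1 - Cmod z) beta)) by ring.
    apply Rmult_le_compat; auto. apply Cmod_ge_0. }
  assert (Hex : ex_series (V:=C_CompleteNormedModule) (term K nu beta a z)).
  { apply (ex_series_le (K:=C_AbsRing) (V:=C_CompleteNormedModule) _ _ Hb1).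
    eexists. apply geom_series_S. rewrite Rabs_right; lra. }
  destruct Hex as [l Hs].
  unfold Phi. rewrite (is_series_C_pair _ _ Hs). exact Hs.
Qed.

Lemma Phi_taylor K nu beta a (z : C) M : 1 < K -> 0 < nu -> beta <= 0 -> 0 <= M ->
  (forall n, Cmod (a n) <= M) -> Cmod z < 1 ->
  exists D : C, forall h : C, Cmod h <= (1 - Cmod z) / 2 ->
    Cmod (Cminus (Cminus (Phi K nu beta a (Cplus z h)) (Phi K nu beta a z)) (Cmult h D))
    <= M * (4 * Rabs (beta * (beta - 1)) * Rpower ((1 - Cmod z)/2) (beta-1-1)) *
       (Rpower (/K) nu / (1 - Rpower (/K) nu)) * Cmod h ^ 2.
Proof.
  intros HK Hnu Hb HM0 HM Hz.
  set (rho := 1 - Cmod z).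
  assert (Hrho : 0 < rho) by (unfold rho; lra).
  set (q := Rpower (/K) nu). pose proof (q_lt1 K nu HK Hnu) as Hq. fold q in Hq.
  assert (Ha : bounded_seq a) by (exists M; exact HM).
  set (w := fun k => Cminus (RtoC (1 + delta K (S k))) z).
  assert (Hw : forall k, rho <= fst (w k)).
  { intros k. pose proof (w_fst_lb K (S k) z ltac:(lra)). pose proof (delta_pos K (S k) ltac:(lra)).
    unfold w, rho. lra. }
  assert (Hwn : forall k, w k <> 0).
  { intros k E. pose proof (Hw k). rewrite E in H. simpl in H. lra. }
  set (dd := fun k => Copp (Cmult (a k) (Cmult (RtoC (Rpower (delta K (S k)) nu))
                  (Cmult (RtoC beta) (Defs.Cpow (w k) (beta-1)))))).
  assert (Hdd : forall k, Cmod (dd k) <= (M * Rabs beta * Rpower rho (beta-1)) * q^(S k)).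
  { intros k. unfold dd. rewrite Cmod_opp, !Cmod_mult, !Cmod_R.
    rewrite Cmod_Cpow by apply Hwn.
    rewrite (Rabs_right (Rpower _ nu)) by (left; unfold Rpower; apply exp_pos).
    rewrite Rpower_delta by lra. fold q.
    assert (Rpower (Cmod (w k)) (beta-1) <= Rpower rho (beta-1)).
    { apply Rpower_le_neg; try lra. eapply Rle_trans. apply Hw. apply Cmod_ge_fst. }
    pose proof (HM k). pose proof (Cmod_ge_0 (a k)). pose proof (Rabs_pos beta).
    assert (0 <= q ^ S k) by (apply pow_le; lra).
    assert (0 <= Rpower (Cmod (w k)) (beta - 1)) by (left; unfold Rpower; apply exp_pos).
    replace (M * Rabs beta * Rpower rho (beta - 1) * q ^ S k) with (M * (q^S k * (Rabs beta * Rpower rho (beta - 1)))) by ring.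
    apply Rmult_le_compat. lra. apply Rmult_le_pos. lra. apply Rmult_le_pos; lra. lra.
    apply Rmult_le_compat_l. lra. apply Rmult_le_compat_l; lra. }
  assert (Hex : ex_series (V:=C_CompleteNormedModule) dd).
  { apply (ex_series_le (K:=C_AbsRing) (V:=C_CompleteNormedModule) _ _ Hdd).
    eexists. apply geom_series_S. rewrite Rabs_right; lra. }
  destruct Hex as [D HD].
  exists D. intros h Hh.
  assert (Hz' : Cmod (Cplus z h) < 1).
  { eapply Rle_lt_trans. apply Cmod_triangle. fold rho in Hh. unfold rho in *. lra. }
  pose proof (term_series K nu beta a (Cplus z h) HK Hnu Hb Ha Hz') as H1.
  pose proof (term_series K nu beta a z HK Hnu Hb Ha Hz) as H0.
  pose proof (is_series_scal_l (K:=C_AbsRing) (V:=C_NormedModule) h _ _ HD) as H2.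
  pose proof (is_series_minus _ _ _ _ (is_series_minus _ _ _ _ H1 H0) H2) as H3.
  set (CT := 4 * Rabs (beta * (beta - 1)) * Rpower (rho / 2) (beta - 1 - 1)).
  assert (HCT : 0 <= CT).
  { unfold CT. apply Rmult_le_pos. apply Rmult_le_pos. lra. apply Rabs_pos. left; unfold Rpower; apply exp_pos. }
  pose proof (geom_series_S q (M * CT * Cmod h ^ 2) ltac:(rewrite Rabs_right; lra)) as H4.
  replace (M * CT * (q / (1 - q)) * Cmod h ^ 2) with (M * CT * Cmod h ^ 2 * (q / (1 - q))) by ring.
  apply (series_norm_le _ _ _ _ H3 H4).
  intros k. simpl.
  set (c := Rpower (delta K (S k)) nu).
  assert (Ew : Cminus (RtoC (1 + delta K (S k))) (Cplus z h) = Cplus (w k) (Copp h)) by (unfold w; ring).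
  unfold term, fn. rewrite Ew. fold c. unfold dd. fold c. fold (w k).
  set (P' := Defs.Cpow (Cplus (w k) (Copp h)) beta).
  set (P0 := Defs.Cpow (w k) beta).
  set (Pm := Defs.Cpow (w k) (beta - 1)).
  change (Cmod (Cplus (Cplus (Cmult (a k) (Cmult (RtoC c) P')) (Copp (Cmult (a k) (Cmult (RtoC c) P0))))
      (Copp (Cmult h (Copp (Cmult (a k) (Cmult (RtoC c) (Cmult (RtoC beta) Pm)))))))
    <= M * CT * Cmod h ^ 2 * q ^ S k).
  replace (Cplus (Cplus (Cmult (a k) (Cmult (RtoC c) P')) (Copp (Cmult (a k) (Cmult (RtoC c) P0))))
      (Copp (Cmult h (Copp (Cmult (a k) (Cmult (RtoC c) (Cmult (RtoC beta) Pm)))))))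
    with (Cmult (a k) (Cmult (RtoC c) (Cminus (Cminus P' P0) (Cmult (Cmult (RtoC beta) Pm) (Copp h))))) by ring.
  rewrite !Cmod_mult, Cmod_R, Rabs_right by (left; unfold c, Rpower; apply exp_pos).
  pose proof (taylorC beta rho (w k) (Copp h) Hb Hrho (Hw k) ltac:(rewrite Cmod_opp; exact Hh)) as HT.
  fold P' P0 Pm CT in HT. rewrite Cmod_opp in HT.
  unfold c. rewrite Rpower_delta by lra. fold q.
  pose proof (HM k). pose proof (Cmod_ge_0 (a k)).
  assert (0 <= q ^ S k) by (apply pow_le; lra).
  pose proof (Cmod_ge_0 (Cminus (Cminus P' P0) (Cmult (Cmult (RtoC beta) Pm) (Copp h)))).
  replace (M * CT * Cmod h ^ 2 * q ^ S k) with (M * (q ^ S k * (CT * Cmod h ^ 2))) by ring.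
  apply Rmult_le_compat; auto. apply Rmult_le_pos; auto.
  apply Rmult_le_compat_l; auto.
Qed.

Lemma Phi_analytic K nu beta a : 1 < K -> 0 < nu -> beta <= 0 -> bounded_seq a ->
  analytic_on_disk (Phi K nu beta a).
Proof.
  intros HK Hnu Hb Ha z Hz. unfold in_disk in Hz.
  destruct (bounded_M a Ha) as [M [HM0 HM]].
  destruct (Phi_taylor K nu beta a z M HK Hnu Hb HM0 HM Hz) as [D HD].
  set (B := M * (4 * Rabs (beta * (beta - 1)) * Rpower ((1 - Cmod z)/2) (beta-1-1)) *
       (Rpower (/K) nu / (1 - Rpower (/K) nu))) in HD.
  pose proof (q_lt1 K nu HK Hnu) as Hq.
  assert (HB : 0 <= B).
  { unfold B. apply Rmult_le_pos. apply Rmult_le_pos. lra.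
    apply Rmult_le_pos. apply Rmult_le_pos. lra. apply Rabs_pos. left; unfold Rpower; apply exp_pos.
    apply Rmult_le_pos. lra. left. apply Rinv_0_lt_compat. lra. }
  exists D. split. apply is_linear_scal_l.
  intros x Hx. pose proof (@is_filter_lim_locally_unique C_AbsRing (AbsRing_NormedModule C_AbsRing) z x Hx) as Ex. subst x.
  intros eps.
  assert (Hr : 0 < Rmin ((1 - Cmod z)/4) (eps / (2 * (B + 1)))).
  { apply Rmin_glb_lt. lra. apply Rdiv_lt_0_compat. apply cond_pos. lra. }
  exists (mkposreal _ Hr). intros y0 Hy.
  set (y := (y0 : C)) in *.
  pose proof (Rmin_l ((1 - Cmod z)/4) (eps / (2 * (B + 1)))).
  pose proof (Rmin_r ((1 - Cmod z)/4) (eps / (2 * (B + 1)))).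
  set (m := Rmin ((1 - Cmod z)/4) (eps / (2 * (B + 1)))) in *.
  assert (Hy2 : Cmod (Cminus y z) < m) by exact Hy.
  set (h := Cminus y z) in *.
  assert (Hy' : y = Cplus z h) by (unfold h; ring).
  assert (Hh : Cmod h <= (1 - Cmod z) / 2) by lra.
  change (Cmod (Cminus (Cminus (Phi K nu beta a y) (Phi K nu beta a z)) (Cmult h D)) <= eps * Cmod h).
  rewrite Hy'. eapply Rle_trans. apply HD. exact Hh.
  assert (Hh2 : B * Cmod h <= eps).
  { assert (Cmod h <= eps / (B+1)).
    { assert (m * 2 <= eps / (B+1)).
      { eapply Rle_trans. apply Rmult_le_compat_r. lra. exact H0. right. field. lra. }
      lra. }
    assert (B * Cmod h <= B * (eps / (B+1))) by (apply Rmult_le_compat_l; auto).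
    assert (B * (eps / (B+1)) <= eps).
    { pose proof (cond_pos eps). unfold Rdiv. 
      assert (B * / (B+1) <= 1). { apply (Rmult_le_reg_r (B+1)). lra. field_simplify; lra. }
      nra. }
    lra. }
  pose proof (Cmod_ge_0 h).
  replace (B * Cmod h ^ 2) with ((B * Cmod h) * Cmod h) by ring.
  apply Rmult_le_compat_r; auto.
Qed.

Lemma Rpower_pos x y : 0 < Rpower x y.
Proof. unfold Rpower; apply exp_pos. Qed.

Lemma rpow_nonneg x y : 0 <= rpow x y.
Proof. unfold rpow. destruct (Req_EM_T x 0). lra. left; apply Rpower_pos. Qed.

Lemma rpow_pos_eq x y : 0 < x -> rpow x y = Rpower x y.
Proof. intros H. unfold rpow. destruct (Req_EM_T x 0). lra. reflexivity. Qed.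

Lemma rpow_0 y : rpow 0 y = 0.
Proof. unfold rpow. destruct (Req_EM_T 0 0). reflexivity. lra. Qed.

Lemma rpow_mult x y c : 0 <= x -> 0 <= y -> rpow (x * y) c = rpow x c * rpow y c.
Proof.
  intros Hx Hy. destruct (Req_dec x 0). subst. rewrite Rmult_0_l, !rpow_0. ring.
  destruct (Req_dec y 0). subst. rewrite Rmult_0_r, !rpow_0. ring.
  assert (0 < x) by lra. assert (0 < y) by lra.
  assert (0 < x * y) by (apply Rmult_lt_0_compat; auto).
  rewrite !rpow_pos_eq by auto. symmetry. apply Rpower_mult_distr; auto.
Qed.

Lemma rpow_rpow x p : 0 <= x -> p <> 0 -> rpow (rpow x p) (1/p) = x.
Proof.
  intros Hx Hp. destruct (Req_dec x 0). subst. rewrite !rpow_0. reflexivity.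
  rewrite (rpow_pos_eq x p) by lra. rewrite rpow_pos_eq by apply Rpower_pos. rewrite Rpower_mult.
  replace (p * (1/p)) with 1 by (field; auto). apply Rpower_1; lra.
Qed.

Lemma rpow_le x y c : 0 <= x -> x <= y -> 0 < c -> rpow x c <= rpow y c.
Proof.
  intros Hx Hxy Hc. destruct (Req_dec x 0). subst. rewrite rpow_0. apply rpow_nonneg.
  rewrite !rpow_pos_eq by lra. apply Rle_Rpower_l; lra.
Qed.

Lemma rpow_Rpower x c d : 0 < x -> rpow (Rpower x c) d = Rpower x (c * d).
Proof. intros H. rewrite rpow_pos_eq by apply Rpower_pos. apply Rpower_mult. Qed.

Lemma rpow_cont p x : 0 < p -> 0 <= x -> forall eps : posreal, exists d : posreal,
  forall y, 0 <= y -> Rabs (y - x) < d -> Rabs (rpow y p - rpow x p) < eps.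
Proof.
  intros Hp Hx eps. destruct (Req_dec x 0) as [E|E].
  - subst x. assert (He : 0 < Rpower eps (1/p)) by apply Rpower_pos.
    exists (mkposreal _ He). intros y Hy Hyx. simpl in Hyx. rewrite rpow_0, Rminus_0_r.
    rewrite Rminus_0_r, Rabs_right in Hyx by lra.
    destruct (Req_dec y 0). subst. rewrite rpow_0, Rabs_R0. apply cond_pos.
    rewrite rpow_pos_eq by lra. rewrite Rabs_right by (left; apply Rpower_pos).
    replace (pos eps) with (Rpower (Rpower eps (1/p)) p).
    apply Rlt_Rpower_l; lra.
    rewrite Rpower_mult. replace (1/p*p) with 1 by (field; lra). apply Rpower_1, cond_pos.
  - assert (Hx' : 0 < x) by lra.
    assert (Hc : continuity_pt (fun y => Rpower y p) x).
    { apply derivable_continuous_pt. exists (p * Rpower x (p-1)). apply derivable_pt_lim_power. exact Hx'. }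
    destruct (Hc eps (cond_pos eps)) as [d [Hd Hd2]].
    assert (Hm : 0 < Rmin d (x/2)) by (apply Rmin_glb_lt; lra).
    exists (mkposreal _ Hm). intros y Hy Hyx. simpl in Hyx.
    pose proof (Rmin_l d (x/2)). pose proof (Rmin_r d (x/2)).
    assert (0 < y) by (apply Rabs_def2 in Hyx; lra).
    rewrite !rpow_pos_eq by lra.
    destruct (Req_dec y x). subst. rewrite Rminus_diag, Rabs_R0. apply cond_pos.
    apply (Hd2 y). split. unfold D_x, no_cond. split; auto. simpl. unfold R_dist. lra.
Qed.

Lemma cont_rpow_comp (g : R -> R) p t : 0 < p -> (forall s, 0 <= g s) ->
  continuous g t -> continuous (fun s => rpow (g s) p) t.
Proof.
  intros Hp Hg Hc. unfold continuous. apply (proj2 (filterlim_locally _ _)). intros eps.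
  destruct (rpow_cont p (g t) Hp (Hg t) eps) as [d Hd].
  generalize (proj1 (filterlim_locally _ _) Hc d). apply filter_imp.
  intros s Hs. apply Hd. apply Hg. exact Hs.
Qed.

Lemma cont_path (r t : R) : filterlim (fun t => Cmult (RtoC r) (cis t)) (locally t)
  (@locally (AbsRing_UniformSpace C_AbsRing) (Cmult (RtoC r) (cis t))).
Proof.
  apply (proj2 (@filterlim_locally R (AbsRing_UniformSpace C_AbsRing) (locally t) _ (fun t => Cmult (RtoC r) (cis t)) (Cmult (RtoC r) (cis t)))). intros eps.
  assert (Hc1 : continuity_pt (fun t => r * cos t) t) by (apply continuity_pt_mult; [apply continuity_pt_const; intros a b; reflexivity| apply continuity_cos]).
  assert (Hc2 : continuity_pt (fun t => r * sin t) t) by (apply continuity_pt_mult; [apply continuity_pt_const; intros a b; reflexivity| apply continuity_sin]).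
  apply continuity_pt_filterlim in Hc1. apply continuity_pt_filterlim in Hc2.
  assert (He : 0 < eps / 2) by (pose proof (cond_pos eps); lra).
  pose proof (proj1 (filterlim_locally _ _) Hc1 (mkposreal _ He)) as H1.
  pose proof (proj1 (filterlim_locally _ _) Hc2 (mkposreal _ He)) as H2.
  generalize (filter_and _ _ H1 H2). apply filter_imp. intros s [Hs1 Hs2].
  change (Cmod (Cminus (Cmult (RtoC r) (cis s)) (Cmult (RtoC r) (cis t))) < eps).
  eapply Rle_lt_trans. apply Cmod_le_abs.
  change (Rabs (r * cos s - r * cos t) < eps/2) in Hs1.
  change (Rabs (r * sin s - r * sin t) < eps/2) in Hs2.
  unfold cis. cbn [fst snd Cminus Cplus Copp Cmult RtoC].
  replace (r * cos s - 0 * sin s + - (r * cos t - 0 * sin t)) with (r * cos s - r * cos t) by ring.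
  replace (r * sin s + 0 * cos s + - (r * sin t + 0 * cos t)) with (r * sin s - r * sin t) by ring.
  lra.
Qed.

Lemma integrand_cont (f : C -> C) p r t : analytic_on_disk f -> 0 <= r < 1 -> 0 < p ->
  continuous (fun t => rpow (Cmod (f (Cmult (RtoC r) (cis t)))) p) t.
Proof.
  intros Hf Hr Hp. apply cont_rpow_comp; auto. intros s; apply Cmod_ge_0.
  assert (Hd : in_disk (Cmult (RtoC r) (cis t))).
  { unfold in_disk. rewrite Cmod_mult, Cmod_R. unfold cis, Cmod. cbn [fst snd].
    rewrite <- !Rsqr_pow2, Rplus_comm, sin2_cos2, sqrt_1. rewrite Rabs_right; lra. }
  pose proof (ex_derive_continuous f _ (Hf _ Hd)) as Hc.
  unfold continuous.
  apply (filterlim_comp _ _ _ (fun s => f (Cmult (RtoC r) (cis s))) (fun v : C_NormedModule => norm v) (locally t) (locally (f (Cmult (RtoC r) (cis t))))).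
  apply (filterlim_comp _ _ _ (fun s => Cmult (RtoC r) (cis s)) f (locally t) (@locally (AbsRing_UniformSpace C_AbsRing) (Cmult (RtoC r) (cis t)))).
  apply cont_path. exact Hc.
  apply (filterlim_norm (K:=C_AbsRing) (V:=C_NormedModule)).
Qed.

Lemma pow_le_1 q n : 0 <= q <= 1 -> q ^ n <= 1.
Proof. intros H. rewrite <- (pow1 n). apply pow_incr. lra. Qed.

Lemma GS (T : nat -> R) (A A0 q1 q2 : R) (N : nat) : 0 <= A -> 0 <= A0 -> 0 <= q1 < 1 -> 0 <= q2 < 1 ->
  (forall k, (k < N)%nat -> T k <= A * q2^(N-k)) -> T N <= A0 ->
  (forall k, (N < k)%nat -> T k <= A * q1^(k-N)) ->
  forall m, sum_n T m <= A * (q2/(1-q2)) + A0 + A * (q1/(1-q1)).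
Proof.
  intros HA HA0 Hq1 Hq2 Hlt HN Hgt.
  assert (P1 : forall m, (m < N)%nat -> sum_n T m <= A * q2^(N-m) / (1-q2)).
  { induction m; intros Hm.
    - rewrite sum_O. eapply Rle_trans. apply Hlt; lia.
      replace (N - 0)%nat with N by lia.
      assert (0 <= A * q2^N) by (apply Rmult_le_pos; auto; apply pow_le; lra).
      unfold Rdiv. assert (1 <= /(1-q2)).
      { rewrite <- Rinv_1. apply Rinv_le_contravar; lra. }
      nra.
    - rewrite sum_Sn. specialize (IHm ltac:(lia)). pose proof (Hlt (S m) Hm).
      replace (N - m)%nat with (S (N - S m)) in IHm by lia.
      simpl in IHm. change (plus (sum_n T m) (T (S m))) with (sum_n T m + T (S m)).
      assert (A * q2 ^ (N - S m) / (1 - q2) = A * (q2 * q2 ^ (N - S m)) / (1 - q2) + A * q2 ^ (N - S m)) by (field; lra).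
      lra. }
  assert (P2 : forall j, sum_n T (N + j) <= A * (q2/(1-q2)) + A0 + A * q1 * (1 - q1^j) / (1 - q1)).
  { induction j.
    - replace (1 - q1^0) with 0 by (simpl; ring). rewrite Nat.add_0_r.
      destruct N as [|N'].
      + rewrite sum_O. assert (0 <= A * (q2/(1-q2))) by (apply Rmult_le_pos; auto; apply Rdiv_le_0_compat; lra).
        replace (A * q1 * 0 / (1 - q1)) with 0 by (field; lra). lra.
      + rewrite sum_Sn. change (plus (sum_n T N') (T (S N'))) with (sum_n T N' + T (S N')).
        specialize (P1 N' ltac:(lia)). replace (S N' - N')%nat with 1%nat in P1 by lia.
        replace (A * q1 * 0 / (1 - q1)) with 0 by (field; lra).
        replace (A * q2 ^ 1 / (1 - q2)) with (A * (q2 / (1 - q2))) in P1 by (field; lra). lra.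
    - replace (N + S j)%nat with (S (N + j)) by lia. rewrite sum_Sn.
      change (plus (sum_n T (N + j)) (T (S (N + j)))) with (sum_n T (N + j) + T (S (N + j))).
      pose proof (Hgt (S (N + j)) ltac:(lia)). replace (S (N + j) - N)%nat with (S j) in H by lia.
      assert (A * q1 * (1 - q1 ^ S j) / (1 - q1) = A * q1 * (1 - q1 ^ j) / (1 - q1) + A * q1 ^ S j)
        by (simpl; field; lra).
      lra. }
  intros m. destruct (Nat.lt_ge_cases m N) as [Hm|Hm].
  - eapply Rle_trans. apply P1; auto.
    assert (q2 ^ (N - m) <= q2).
    { replace (N - m)%nat with (S (N - m - 1)) by lia. simpl.
      assert (q2^(N-m-1) <= 1) by (apply pow_le_1; lra). nra. }
    assert (0 <= A * (q1/(1-q1))) by (apply Rmult_le_pos; auto; apply Rdiv_le_0_compat; lra).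
    assert (A * q2 ^ (N - m) / (1 - q2) <= A * (q2 / (1 - q2))).
    { unfold Rdiv. rewrite <- Rmult_assoc. apply Rmult_le_compat_r. left; apply Rinv_0_lt_compat; lra.
      apply Rmult_le_compat_l; auto. }
    lra.
  - replace m with (N + (m - N))%nat by lia. eapply Rle_trans. apply P2.
    assert (A * q1 * (1 - q1 ^ (m - N)) / (1 - q1) <= A * (q1 / (1 - q1))).
    { assert (0 <= q1 ^ (m-N)) by (apply pow_le; lra).
      unfold Rdiv. assert (0 < /(1-q1)) by (apply Rinv_0_lt_compat; lra).
      assert (0 <= A * q1) by (apply Rmult_le_pos; lra).
      replace (A * (q1 * / (1 - q1))) with (A * q1 * 1 * / (1 - q1)) by ring.
      apply Rmult_le_compat_r. lra. apply Rmult_le_compat_l; lra. }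
    lra.
Qed.

Lemma Rp_inv x c : 0 < x -> Rpower (/x) c = Rpower x (-c).
Proof. intros H. unfold Rpower. rewrite ln_Rinv by auto. f_equal. ring. Qed.

Lemma Rp_div a b c : 0 < a -> 0 < b -> Rpower (a/b) c = Rpower a c * Rpower b (-c).
Proof.
  intros Ha Hb. unfold Rdiv. rewrite <- Rpower_mult_distr by (try apply Rinv_0_lt_compat; auto).
  rewrite Rp_inv by auto. reflexivity.
Qed.

Lemma Rp_le1 u c : 0 < u <= 1 -> 0 <= c -> Rpower u c <= 1.
Proof.
  intros Hu Hc. unfold Rpower. rewrite <- exp_0. apply exp_le_mono.
  assert (ln u <= 0) by (rewrite <- ln_1; apply ln_le_mono; lra). nra.
Qed.

Lemma Rp_le1' u c : 1 <= u -> c <= 0 -> Rpower u c <= 1.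
Proof.
  intros Hu Hc. unfold Rpower. rewrite <- exp_0. apply exp_le_mono.
  assert (0 <= ln u) by (rewrite <- ln_1; apply ln_le_mono; lra). nra.
Qed.

Lemma bernoulli K n : 1 <= K -> 1 + INR n * (K - 1) <= K ^ n.
Proof.
  intros HK. induction n. simpl. lra.
  rewrite S_INR. simpl. pose proof (pos_INR n).
  assert (0 <= INR n * (K-1) * (K - 1)) by (apply Rmult_le_pos; [apply Rmult_le_pos|]; lra).
  assert (K * (1 + INR n * (K - 1)) <= K * K ^ n) by (apply Rmult_le_compat_l; lra).
  nra.
Qed.

Lemma find_N (u : nat -> R) n : u n <= 1 -> exists N, u N <= 1 /\ (forall k, (k < N)%nat -> 1 < u k).
Proof.
  revert n. induction n as [n IH] using (well_founded_induction Wf_nat.lt_wf). intros Hn.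
  destruct (classic (forall k, (k < n)%nat -> 1 < u k)) as [H|H].
  - exists n. auto.
  - apply not_all_ex_not in H. destruct H as [k Hk].
    apply imply_to_and in Hk. destruct Hk as [Hk1 Hk2].
    apply (IH k Hk1). lra.
Qed.

Lemma delta_S K k : 0 < K -> delta K (S k) = delta K 1 * delta K k.
Proof. intros HK. unfold delta. simpl. rewrite Rmult_1_r. field. split. apply pow_nonzero; lra. lra. Qed.

Lemma delta_add K i j : 0 < K -> delta K (i + j) = delta K i * delta K j.
Proof. intros HK. unfold delta. rewrite pow_add. field. split; apply pow_nonzero; lra. Qed.

Lemma term_bounds nu beta d x : 0 < d -> 0 < x -> beta <= 0 ->
  Rpower d nu * Rpower (d + x) beta <= Rpower x (nu + beta) * Rpower (d / x) nu /\
  Rpower d nu * Rpower (d + x) beta <= Rpower x (nu + beta) * Rpower (d / x) (nu + beta).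
Proof.
  intros Hd Hx Hb. split.
  - eapply Rle_trans. apply Rmult_le_compat_l. left; apply Rpower_pos.
    apply (Rpower_le_neg x (d + x) beta); lra.
    rewrite Rp_div by auto. rewrite Rpower_plus.
    replace (Rpower x nu * Rpower x beta * (Rpower d nu * Rpower x (- nu))) with
      (Rpower d nu * Rpower x beta * (Rpower x nu * Rpower x (- nu))) by ring.
    rewrite <- Rpower_plus. replace (nu + - nu) with 0 by ring. rewrite Rpower_O by auto. lra.
  - eapply Rle_trans. apply Rmult_le_compat_l. left; apply Rpower_pos.
    apply (Rpower_le_neg d (d + x) beta); lra.
    rewrite Rp_div by auto. rewrite <- Rpower_plus.
    replace (Rpower x (nu + beta) * (Rpower d (nu + beta) * Rpower x (- (nu + beta)))) with
      (Rpower d (nu + beta) * (Rpower x (nu + beta) * Rpower x (- (nu + beta)))) by ring.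
    rewrite <- (Rpower_plus (nu+beta)). replace (nu + beta + - (nu + beta)) with 0 by ring. rewrite Rpower_O by auto. lra.
Qed.

Lemma SL K nu beta x : 1 < K -> 0 < nu -> beta <= 0 -> nu + beta < 0 -> 0 < x ->
  forall m, sum_n (fun k => Rpower (delta K (S k)) nu * Rpower (delta K (S k) + x) beta) m
    <= Rpower x (nu+beta) * (/ Rpower (/K) (-(nu+beta)) * (Rpower (/K) (-(nu+beta)) / (1 - Rpower (/K) (-(nu+beta))))
          + 1 + / Rpower (/K) (-(nu+beta)) * (Rpower (/K) nu / (1 - Rpower (/K) nu))).
Proof.
  intros HK Hnu Hb Hg Hx m.
  set (q1 := Rpower (/K) nu). set (q2 := Rpower (/K) (-(nu+beta))).
  pose proof (q_lt1 K nu HK Hnu) as Hq1. pose proof (q_lt1 K (-(nu+beta)) HK ltac:(lra)) as Hq2.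
  fold q1 in Hq1. fold q2 in Hq2.
  set (y := Rpower x (nu+beta)).
  assert (Hy : 0 < y) by apply Rpower_pos.
  set (u := fun k => delta K (S k) / x).
  assert (Hu : forall k, 0 < u k) by (intros k; unfold u; apply Rdiv_lt_0_compat; [apply delta_pos; lra| lra]).
  assert (Hex : exists n, u n <= 1).
  { destruct (archimed_cor1 (x * (K - 1))) as [n [Hn1 Hn2]]. apply Rmult_lt_0_compat; lra.
    exists n. unfold u, delta.
    pose proof (bernoulli K (S n) ltac:(lra)). rewrite S_INR in H.
    assert (0 < INR n) by (apply lt_0_INR; lia).
    assert (1 < INR n * (x * (K-1))).
    { apply (Rmult_lt_compat_l (INR n)) in Hn1; auto. rewrite Rinv_r in Hn1 by lra. lra. }
    assert (0 < K ^ S n) by (apply pow_lt; lra).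
    assert (1 <= x * K ^ S n) by nra.
    apply (Rmult_le_reg_r (K ^ S n * x)). nra. field_simplify; lra. }
  destruct Hex as [n Hn]. destruct (find_N u n Hn) as [N [HN1 HN2]].
  assert (HTb : forall k, Rpower (delta K (S k)) nu * Rpower (delta K (S k) + x) beta <= y * Rpower (u k) nu /\
                          Rpower (delta K (S k)) nu * Rpower (delta K (S k) + x) beta <= y * Rpower (u k) (nu+beta)).
  { intros k. apply term_bounds; auto. apply delta_pos; lra. }
  assert (Hq2i : 1 <= / q2).
  { rewrite <- Rinv_1. apply Rinv_le_contravar; lra. }
  pose proof (GS (fun k => Rpower (delta K (S k)) nu * Rpower (delta K (S k) + x) beta) (y * / q2) y q1 q2 N
    ltac:(apply Rmult_le_pos; lra) ltac:(lra) ltac:(lra) ltac:(lra)) as G.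
  replace (y * (/ q2 * (q2 / (1 - q2)) + 1 + / q2 * (q1 / (1 - q1)))) with
    (y * / q2 * (q2 / (1 - q2)) + y + y * / q2 * (q1 / (1 - q1))) by ring.
  apply G; clear G.
  - intros k Hk. destruct N as [|N']. lia.
    pose proof (HN2 N' ltac:(lia)) as HuN.
    eapply Rle_trans. apply (proj2 (HTb k)).
    assert (Eu : u k = u N' / delta K (N' - k)).
    { unfold u. assert (delta K (S N') = delta K (S k) * delta K (N' - k)).
      { rewrite <- delta_add by lra. f_equal. lia. }
      rewrite H. pose proof (delta_pos K (N' - k) ltac:(lra)). assert (delta K (N' - k) <> 0) by lra.
      assert (x <> 0) by lra. field; auto. }
    rewrite Eu, Rp_div by (auto; apply delta_pos; lra).
    rewrite Rpower_delta by lra. fold q2.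
    replace (S N' - k)%nat with (S (N' - k)) by lia. simpl.
    assert (Rpower (u N') (nu + beta) <= 1) by (apply Rp_le1'; lra).
    assert (0 <= q2 ^ (N' - k)) by (apply pow_le; lra).
    pose proof (Rpower_pos (u N') (nu+beta)).
    replace (y * / q2 * (q2 * q2 ^ (N' - k))) with (y * q2 ^ (N' - k)) by (field; lra).
    apply Rmult_le_compat_l. lra.
    replace (q2 ^ (N' - k)) with (1 * q2 ^ (N' - k)) at 2 by ring.
    apply Rmult_le_compat_r; lra.
  - eapply Rle_trans. apply (proj1 (HTb N)).
    assert (Rpower (u N) nu <= 1) by (apply Rp_le1; [split; auto| lra]).
    pose proof (Rpower_pos (u N) nu).
    replace y with (y * 1) at 2 by ring. apply Rmult_le_compat_l; lra.
  - intros k Hk. eapply Rle_trans. apply (proj1 (HTb k)).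
    assert (Eu : u k = u N * delta K (k - N)).
    { unfold u. assert (delta K (S k) = delta K (S N) * delta K (k - N)).
      { rewrite <- delta_add by lra. f_equal. lia. }
      rewrite H. assert (x <> 0) by lra. field; auto. }
    rewrite Eu. rewrite <- Rpower_mult_distr by (auto; apply delta_pos; lra).
    rewrite Rpower_delta by lra. fold q1.
    assert (Rpower (u N) nu <= 1) by (apply Rp_le1; [split; auto| lra]).
    assert (0 <= q1 ^ (k - N)) by (apply pow_le; lra).
    pose proof (Rpower_pos (u N) nu).
    assert (Rpower (u N) nu * q1 ^ (k - N) <= / q2 * q1 ^ (k - N)) by (apply Rmult_le_compat_r; lra).
    replace (y * / q2 * q1 ^ (k - N)) with (y * (/ q2 * q1 ^ (k - N))) by ring.
    apply Rmult_le_compat_l; lra.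
Qed.

Lemma sin_lb_ge t : 0 <= t <= 2 -> t <= PI -> t / 4 <= sin t.
Proof.
  intros Ht Hp.
  destruct (SIN t) as [H _]; try lra.
  eapply Rle_trans; [|exact H].
  unfold sin_lb, sin_approx. cbn [sum_f_R0]. unfold sin_term.
  change (2*0+1)%nat with 1%nat. change (2*1+1)%nat with 3%nat. change (2*2+1)%nat with 5%nat. change (2*3+1)%nat with 7%nat.
  replace (INR (Factorial.fact 1)) with 1 by reflexivity.
  replace (INR (Factorial.fact 3)) with 6 by (rewrite INR_IZR_INZ; reflexivity).
  replace (INR (Factorial.fact 5)) with 120 by (rewrite INR_IZR_INZ; reflexivity).
  replace (INR (Factorial.fact 7)) with 5040 by (rewrite INR_IZR_INZ; reflexivity).
  cbn [pow].
  assert (0 <= t*t) by nra. assert (t*t <= 4) by nra.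
  assert (0 <= t*t*t) by (repeat apply Rmult_le_pos; lra).
  assert (t*t*t <= 4 * t) by nra.
  assert (0 <= t*t*t*t*t) by (repeat apply Rmult_le_pos; lra).
  assert (t * t * t * t * t * t * t <= 16 * t * t * t).
  { assert (t*t*t*t <= 16) by nra.
    replace (t * t * t * t * t * t * t) with ((t*t*t*t) * (t*t*t)) by ring. nra. }
  lra.
Qed.

Lemma cos_lb_ge t : 0 <= t <= 1 -> 1 - t^2/2 <= cos t.
Proof.
  intros Ht. pose proof PI2_3_2 as HP.
  destruct (COS t) as [H _]; try lra.
  eapply Rle_trans; [|exact H].
  unfold cos_lb, cos_approx. cbn [sum_f_R0]. unfold cos_term.
  change (2*0)%nat with 0%nat. change (2*1)%nat with 2%nat. change (2*2)%nat with 4%nat. change (2*3)%nat with 6%nat.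
  replace (INR (Factorial.fact 0)) with 1 by reflexivity.
  replace (INR (Factorial.fact 2)) with 2 by (rewrite INR_IZR_INZ; reflexivity).
  replace (INR (Factorial.fact 4)) with 24 by (rewrite INR_IZR_INZ; reflexivity).
  replace (INR (Factorial.fact 6)) with 720 by (rewrite INR_IZR_INZ; reflexivity).
  cbn [pow].
  assert (0 <= t*t) by nra. assert (t*t <= 1) by nra.
  assert (0 <= t*t*t*t) by (repeat apply Rmult_le_pos; lra).
  assert (t*t*t*t*t*t <= t*t*t*t) by (replace (t*t*t*t*t*t) with ((t*t*t*t)*(t*t)) by ring; nra).
  lra.
Qed.

Definition Wz (d r t : R) : C := Cminus (RtoC (1 + d)) (Cmult (RtoC r) (cis t)).

Lemma Wz_fst d r t : fst (Wz d r t) = 1 + d - r * cos t.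
Proof. unfold Wz, cis. cbn. ring. Qed.
Lemma Wz_snd d r t : snd (Wz d r t) = - (r * sin t).
Proof. unfold Wz, cis. cbn. ring. Qed.

Lemma Wz_radial d r t : 0 <= r -> d + (1 - r) <= Cmod (Wz d r t).
Proof.
  intros Hr. eapply Rle_trans; [|apply Cmod_ge_fst]. rewrite Wz_fst.
  pose proof (COS_bound t). nra.
Qed.

Lemma Wz_lower d r t : 0 < d <= 1 -> 0 <= r < 1 -> 0 <= t <= PI ->
  (d + (1 - r) + t) / 16 <= Cmod (Wz d r t).
Proof.
  intros Hd Hr Ht. pose proof PI_4. pose proof PI2_3_2.
  pose proof (Cmod_ge_fst (Wz d r t)) as Hf. pose proof (abs_snd_le (Wz d r t)) as Hs.
  rewrite Wz_fst in Hf. rewrite Wz_snd in Hs. pose proof (COS_bound t).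
  destruct (Rle_dec (PI/2) t) as [Ht2|Ht2].
  - assert (cos t <= 0) by (apply cos_le_0; lra). nra.
  - destruct (Rlt_dec r (1/2)) as [Hr2|Hr2].
    + nra.
    + assert (t / 4 <= sin t) by (apply sin_lb_ge; lra).
      rewrite Rabs_Ropp, Rabs_mult, Rabs_right in Hs by lra.
      rewrite (Rabs_right (sin t)) in Hs by lra.
      assert (r * (t/4) <= r * sin t) by (apply Rmult_le_compat_l; lra).
      nra.
Qed.

Lemma Wz_sym d r t : Cmod (Wz d r t) = Cmod (Wz d r (2 * PI - t)).
Proof.
  unfold Cmod. rewrite !Wz_fst, !Wz_snd.
  rewrite cos_minus, sin_minus, cos_2PI, sin_2PI. f_equal. ring.
Qed.

Lemma Wz_upper d t : 0 < d <= 1 -> 0 <= t <= d -> Cmod (Wz d (1 - d) t) <= 4 * d.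
Proof.
  intros Hd Ht. eapply Rle_trans. apply Cmod_le_abs. rewrite Wz_fst, Wz_snd.
  pose proof (cos_lb_ge t ltac:(lra)). pose proof (COS_bound t).
  pose proof (sin2_cos2 t). unfold Rsqr in H1.
  assert (Hsin : Rabs (sin t) <= t).
  { apply Rsqr_incr_0_var. rewrite <- Rsqr_abs. unfold Rsqr.
    assert (0 <= 1 - t^2/2) by nra. nra. lra. }
  rewrite Rabs_Ropp, Rabs_mult, (Rabs_right (1 - d)) by lra.
  rewrite Rabs_right by nra.
  assert ((1 - d) * Rabs (sin t) <= t) by (pose proof (Rabs_pos (sin t)); nra).
  nra.
Qed.

Lemma series_norm_le2 (a : nat -> C) l B :
  is_series a l -> (forall n, sum_n (fun k => Cmod (a k)) n <= B) -> Cmod l <= B.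
Proof.
  intros Ha Hb.
  assert (H : forall n, Cmod (sum_n a n) <= B).
  { intros n. eapply Rle_trans; [|apply (Hb n)]. unfold sum_n.
    change (Cmod (sum_n_m a 0 n)) with (@norm C_AbsRing C_NormedModule (sum_n_m a 0 n)).
    apply (norm_sum_n_m (K:=C_AbsRing) (V:=C_NormedModule)). }
  assert (L1 : is_lim_seq (fun n => Cmod (sum_n a n)) (Cmod l)).
  { unfold is_lim_seq. simpl.
    change (Cmod l) with (@norm C_AbsRing C_NormedModule l).
    eapply filterlim_comp. exact Ha. apply (filterlim_norm (K:=C_AbsRing) (V:=C_NormedModule)). }
  pose proof (is_lim_seq_le _ _ _ _ H L1 (is_lim_seq_const B)). simpl in H0. exact H0.
Qed.

Definition CS (K nu beta : R) : R :=
  / Rpower (/K) (-(nu+beta)) * (Rpower (/K) (-(nu+beta)) / (1 - Rpower (/K) (-(nu+beta))))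
          + 1 + / Rpower (/K) (-(nu+beta)) * (Rpower (/K) nu / (1 - Rpower (/K) nu)).

Lemma CS_pos K nu beta : 1 < K -> 0 < nu -> nu + beta < 0 -> 0 < CS K nu beta.
Proof.
  intros HK Hnu Hg. unfold CS.
  pose proof (q_lt1 K nu HK Hnu). pose proof (q_lt1 K (-(nu+beta)) HK ltac:(lra)).
  assert (0 <= / Rpower (/ K) (- (nu + beta)) * (Rpower (/ K) (- (nu + beta)) / (1 - Rpower (/ K) (- (nu + beta))))).
  { apply Rmult_le_pos. left; apply Rinv_0_lt_compat; lra. apply Rdiv_le_0_compat; lra. }
  assert (0 <= / Rpower (/ K) (- (nu + beta)) * (Rpower (/ K) nu / (1 - Rpower (/ K) nu))).
  { apply Rmult_le_pos. left; apply Rinv_0_lt_compat; lra. apply Rdiv_le_0_compat; lra. }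
  lra.
Qed.

Lemma delta_le1 K n : 1 < K -> delta K n <= 1.
Proof.
  intros HK. unfold delta. rewrite <- Rinv_1. apply Rinv_le_contravar. lra.
  rewrite <- (pow1 n). apply pow_incr. lra.
Qed.

Lemma Phi_bound_gen K nu beta a M (z : C) x : 1 < K -> 0 < nu -> beta <= 0 -> nu + beta < 0 ->
  0 <= M -> (forall n, Cmod (a n) <= M) -> Cmod z < 1 -> 0 < x ->
  (forall n, (delta K n + x) / 16 <= Cmod (Cminus (RtoC (1 + delta K n)) z)) ->
  Cmod (Phi K nu beta a z) <= M * Rpower 16 (-beta) * CS K nu beta * Rpower x (nu + beta).
Proof.
  intros HK Hnu Hb Hg HM0 HM Hz Hx HW.
  assert (Ha : bounded_seq a) by (exists M; exact HM).
  apply (series_norm_le2 _ _ _ (term_series K nu beta a z HK Hnu Hb Ha Hz)).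
  intros m.
  assert (Hk : forall k, Cmod (term K nu beta a z k) <=
     (M * Rpower 16 (-beta)) * (Rpower (delta K (S k)) nu * Rpower (delta K (S k) + x) beta)).
  { intros k. unfold term. rewrite Cmod_mult.
    pose proof (delta_pos K (S k) ltac:(lra)).
    assert (Cmod (fn K nu beta (S k) z) <= Rpower (delta K (S k)) nu * Rpower ((delta K (S k) + x)/16) beta).
    { apply Cmod_fn_le; [lra|lra| apply Rdiv_lt_0_compat; lra | apply HW | lra]. }
    rewrite Rp_div in H0 by lra.
    pose proof (Cmod_ge_0 (fn K nu beta (S k) z)).
    replace (M * Rpower 16 (- beta) * (Rpower (delta K (S k)) nu * Rpower (delta K (S k) + x) beta)) with
      (M * (Rpower (delta K (S k)) nu * (Rpower (delta K (S k) + x) beta * Rpower 16 (- beta)))) by ring.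
    apply Rmult_le_compat; auto. apply Cmod_ge_0. }
  eapply Rle_trans. unfold sum_n. apply sum_n_m_le. intros k. apply Hk.
  fold (sum_n (fun k => M * Rpower 16 (- beta) * (Rpower (delta K (S k)) nu * Rpower (delta K (S k) + x) beta)) m).
  rewrite (sum_n_mult_l (K:=R_Ring)). change (mult ?a ?b) with (a * b).
  pose proof (SL K nu beta x HK Hnu Hb Hg Hx m). fold (CS K nu beta) in H.
  assert (0 <= M * Rpower 16 (-beta)) by (apply Rmult_le_pos; auto; left; apply Rpower_pos).
  replace (M * Rpower 16 (- beta) * CS K nu beta * Rpower x (nu + beta)) with
    (M * Rpower 16 (- beta) * (Rpower x (nu + beta) * CS K nu beta)) by ring.
  apply Rmult_le_compat_l; auto.
Qed.

Lemma Rpower_cont y e : 0 < y -> continuous (fun t => Rpower t e) y.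
Proof.
  intros Hy. apply (ex_derive_continuous (K:=R_AbsRing) (V:=R_NormedModule)). unfold Rpower. auto_derive. lra.
Qed.

Lemma is_RInt_pow1 s e : 0 < s -> e + 1 <> 0 ->
  is_RInt (fun t => Rpower (s + t) e) 0 PI ((Rpower (s + PI) (e+1) - Rpower s (e+1)) / (e+1)).
Proof.
  intros Hs He. pose proof PI_RGT_0.
  replace ((Rpower (s + PI) (e+1) - Rpower s (e+1)) / (e+1)) with
    (minus ((fun t => Rpower (s + t) (e+1) / (e+1)) PI) ((fun t => Rpower (s + t) (e+1) / (e+1)) 0)).
  2: { change (minus ?a ?b) with (a - b). rewrite Rplus_0_r. unfold Rdiv. rewrite Rmult_minus_distr_r. reflexivity. }
  apply (is_RInt_derive (fun t => Rpower (s + t) (e+1) / (e+1))).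
  - intros x Hx. rewrite Rmin_left, Rmax_right in Hx by lra.
    unfold Rpower. auto_derive. lra.
    assert (E : exp ((e+1) * ln (s+x)) = exp (e * ln (s+x)) * exp (ln (s+x))) by (rewrite <- exp_plus; f_equal; ring).
    rewrite E, exp_ln by lra. field. split; auto. lra.
  - intros x Hx. rewrite Rmin_left, Rmax_right in Hx by lra.
    apply (ex_derive_continuous (K:=R_AbsRing) (V:=R_NormedModule)). unfold Rpower. auto_derive. lra.
Qed.

Lemma is_RInt_pow2 s e : 0 < s -> e + 1 <> 0 ->
  is_RInt (fun t => Rpower (s + (2*PI - t)) e) PI (2*PI) ((Rpower (s + PI) (e+1) - Rpower s (e+1)) / (e+1)).
Proof.
  intros Hs He. pose proof PI_RGT_0.
  replace ((Rpower (s + PI) (e+1) - Rpower s (e+1)) / (e+1)) with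
    (minus ((fun t => - (Rpower (s + (2*PI - t)) (e+1) / (e+1))) (2*PI)) ((fun t => - (Rpower (s + (2*PI - t)) (e+1) / (e+1))) PI)).
  2: { change (minus ?a ?b) with (a - b). replace (2*PI - 2*PI) with 0 by ring. replace (2*PI - PI) with PI by ring.
       rewrite Rplus_0_r. unfold Rdiv. rewrite Rmult_minus_distr_r. rewrite Ropp_mult_distr_l. unfold Rminus. rewrite Ropp_involutive. rewrite Rplus_comm. rewrite Ropp_mult_distr_l. reflexivity. }
  apply (is_RInt_derive (fun t => - (Rpower (s + (2*PI - t)) (e+1) / (e+1)))).
  - intros x Hx. rewrite Rmin_left, Rmax_right in Hx by lra.
    unfold Rpower. auto_derive. lra.
    replace (2 * PI + - x) with (2*PI - x) by ring.
    assert (E : exp ((e+1) * ln (s + (2*PI - x))) = exp (e * ln (s + (2*PI - x))) * exp (ln (s + (2*PI - x)))) by (rewrite <- exp_plus; f_equal; ring).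
    rewrite E, exp_ln by lra. field. split; auto. lra.
  - intros x Hx. rewrite Rmin_left, Rmax_right in Hx by lra.
    apply (ex_derive_continuous (K:=R_AbsRing) (V:=R_NormedModule)). unfold Rpower. auto_derive. lra.
Qed.

Lemma Cmod_rcis r t : 0 <= r -> Cmod (Cmult (RtoC r) (cis t)) = r.
Proof.
  intros Hr. rewrite Cmod_mult, Cmod_R. unfold cis, Cmod. cbn [fst snd].
  rewrite <- !Rsqr_pow2, Rplus_comm, sin2_cos2, sqrt_1. rewrite Rabs_right; lra.
Qed.

Lemma Mp_upper p (f : C -> C) r A g :
  0 < p -> 0 <= r < 1 -> analytic_on_disk f -> 0 <= A -> g * p + 1 < 0 ->
  (forall t, 0 < t < PI -> Cmod (f (Cmult (RtoC r) (cis t))) <= A * Rpower ((1-r) + t) g) ->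
  (forall t, PI < t < 2*PI -> Cmod (f (Cmult (RtoC r) (cis t))) <= A * Rpower ((1-r) + (2*PI - t)) g) ->
  Mp p r f <= A * Rpower (1-r) (g + 1/p) * Rpower (/(PI * (-(g*p+1)))) (1/p).
Proof.
  intros Hp Hr Hf HA Hg H1 H2.
  pose proof PI_RGT_0 as HPI.
  set (s := 1 - r). assert (Hs : 0 < s) by (unfold s; lra).
  set (F := fun t => rpow (Cmod (f (Cmult (RtoC r) (cis t)))) p).
  assert (HF : forall a b, ex_RInt F a b).
  { intros a b. apply (ex_RInt_continuous (V:=R_CompleteNormedModule)). intros z _. apply integrand_cont; auto. }
  set (e := g * p).
  assert (Hpt : forall t x, Cmod (f (Cmult (RtoC r) (cis t))) <= A * Rpower x g -> F t <= rpow A p * Rpower x e).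
  { intros t x Hx. unfold F. eapply Rle_trans. apply rpow_le; [apply Cmod_ge_0| exact Hx| lra].
    rewrite rpow_mult by (auto; left; apply Rpower_pos). rewrite rpow_pos_eq with (x := Rpower x g) by apply Rpower_pos.
    rewrite Rpower_mult. apply Rle_refl. }
  assert (He1 : e + 1 <> 0) by (unfold e; lra).
  assert (I1 : RInt F 0 PI <= rpow A p * ((Rpower (s + PI) (e+1) - Rpower s (e+1)) / (e+1))).
  { pose proof (is_RInt_scal _ _ _ (rpow A p) _ (is_RInt_pow1 s e Hs He1)) as HI.
    assert (E : RInt (fun t => rpow A p * Rpower (s+t) e) 0 PI = rpow A p * ((Rpower (s + PI) (e+1) - Rpower s (e+1)) / (e+1)))
      by (apply is_RInt_unique; exact HI).
    rewrite <- E.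
    apply RInt_le. lra. apply HF. eexists; exact HI.
    intros t Ht. apply Hpt. apply H1. exact Ht. }
  assert (I2 : RInt F PI (2*PI) <= rpow A p * ((Rpower (s + PI) (e+1) - Rpower s (e+1)) / (e+1))).
  { pose proof (is_RInt_scal _ _ _ (rpow A p) _ (is_RInt_pow2 s e Hs He1)) as HI.
    assert (E : RInt (fun t => rpow A p * Rpower (s+(2*PI-t)) e) PI (2*PI) = rpow A p * ((Rpower (s + PI) (e+1) - Rpower s (e+1)) / (e+1)))
      by (apply is_RInt_unique; exact HI).
    rewrite <- E.
    apply RInt_le. lra. apply HF. eexists; exact HI.
    intros t Ht. apply Hpt. apply H2. exact Ht. }
  assert (Hsplit : RInt F 0 (2*PI) = RInt F 0 PI + RInt F PI (2*PI)).
  { rewrite <- (RInt_Chasles F 0 PI (2*PI)) by apply HF. reflexivity. }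
  assert (Hb : (Rpower (s + PI) (e+1) - Rpower s (e+1)) / (e+1) <= Rpower s (e+1) / (-(e+1))).
  { pose proof (Rpower_pos (s+PI) (e+1)). pose proof (Rpower_pos s (e+1)).
    assert (e + 1 < 0) by (unfold e; lra).
    apply (Rmult_le_reg_r (-(e+1))). lra.
    replace ((Rpower (s + PI) (e + 1) - Rpower s (e + 1)) / (e + 1) * - (e + 1)) with
      (Rpower s (e+1) - Rpower (s + PI) (e + 1)) by (field; auto).
    replace (Rpower s (e + 1) / - (e + 1) * - (e + 1)) with (Rpower s (e+1)) by (field; auto). lra. }
  pose proof (rpow_nonneg A p) as HAp.
  assert (Htot : RInt F 0 (2*PI) / (2*PI) <= rpow A p * Rpower s (e+1) * / (PI * (-(g*p+1)))).
  { rewrite Hsplit. fold e.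
    assert (rpow A p * ((Rpower (s + PI) (e+1) - Rpower s (e+1)) / (e+1)) <= rpow A p * (Rpower s (e+1) / (-(e+1))))
      by (apply Rmult_le_compat_l; auto).
    replace (rpow A p * Rpower s (e + 1) * / (PI * - (e + 1))) with ((2 * (rpow A p * (Rpower s (e+1) / (-(e+1))))) * / (2*PI)) by (field; split; lra).
    unfold Rdiv at 1. apply Rmult_le_compat_r. left; apply Rinv_0_lt_compat; lra. lra. }
  assert (Hnn : 0 <= RInt F 0 (2*PI) / (2*PI)).
  { apply Rdiv_le_0_compat; [|lra]. apply RInt_ge_0. lra. apply HF. intros; apply rpow_nonneg. }
  unfold Mp. fold F. fold s.
  eapply Rle_trans. apply rpow_le. exact Hnn. exact Htot. apply Rdiv_lt_0_compat; lra.
  assert (0 < / (PI * - (g * p + 1))) by (apply Rinv_0_lt_compat; nra).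
  rewrite rpow_mult by (try apply Rmult_le_pos; auto; left; try apply Rpower_pos; auto).
  rewrite rpow_mult by (auto; left; apply Rpower_pos).
  rewrite rpow_rpow by lra. rewrite rpow_Rpower by auto. rewrite rpow_pos_eq by auto.
  replace ((e + 1) * (1 / p)) with (g + 1/p) by (unfold e; field; lra). unfold e. lra.
Qed.

Definition single (c : C) (k0 k : nat) : C := if Nat.eq_dec k k0 then c else RtoC 0.

Lemma sum_single c k0 n : sum_n (single c k0) n = if Compare_dec.le_dec k0 n then c else RtoC 0.
Proof.
  induction n.
  - rewrite sum_O. unfold single. destruct (Nat.eq_dec 0 k0); destruct (Compare_dec.le_dec k0 0); try reflexivity; lia.
  - rewrite sum_Sn. rewrite IHn. unfold single.
    destruct (Nat.eq_dec (S n) k0); destruct (Compare_dec.le_dec k0 n); destruct (Compare_dec.le_dec k0 (S n)); try lia.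
    + exact (plus_zero_l (G:=C_AbelianMonoid) c).
    + exact (plus_zero_r (G:=C_AbelianMonoid) c).
    + exact (plus_zero_r (G:=C_AbelianMonoid) (RtoC 0)).
Qed.

Lemma is_series_single (c : C) k0 : is_series (V:=C_NormedModule) (single c k0) c.
Proof.
  unfold is_series. apply (proj2 (filterlim_locally _ _)). intros eps.
  exists k0. intros n Hn. rewrite sum_single. destruct (Compare_dec.le_dec k0 n); [|lia]. apply ball_center.
Qed.

Lemma Mp_lower p (f : C -> C) r t0 L : 0 < p -> 0 <= r < 1 -> analytic_on_disk f ->
  0 < t0 <= 2 * PI -> 0 <= L ->
  (forall t, 0 < t < t0 -> L <= Cmod (f (Cmult (RtoC r) (cis t)))) ->
  Rpower (t0 / (2*PI)) (1/p) * L <= Mp p r f.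
Proof.
  intros Hp Hr Hf Ht0 HL H.
  pose proof PI_RGT_0 as HPI.
  set (F := fun t => rpow (Cmod (f (Cmult (RtoC r) (cis t)))) p).
  assert (HF : forall a b, ex_RInt F a b).
  { intros a b. apply (ex_RInt_continuous (V:=R_CompleteNormedModule)). intros z _. apply integrand_cont; auto. }
  assert (I1 : t0 * rpow L p <= RInt F 0 t0).
  { assert (E : RInt (fun _ => rpow L p) 0 t0 = t0 * rpow L p).
    { rewrite RInt_const. change (scal ?a ?b) with (a * b). rewrite Rminus_0_r. reflexivity. }
    rewrite <- E. apply RInt_le. lra. apply (ex_RInt_const (V:=R_NormedModule)). apply HF.
    intros t Ht. unfold F. apply rpow_le; auto. }
  assert (I2 : 0 <= RInt F t0 (2*PI)).
  { apply RInt_ge_0. lra. apply HF. intros; apply rpow_nonneg. }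
  assert (Hsplit : RInt F 0 (2*PI) = RInt F 0 t0 + RInt F t0 (2*PI)).
  { rewrite <- (RInt_Chasles F 0 t0 (2*PI)) by apply HF. reflexivity. }
  unfold Mp. fold F.
  assert (Hle : t0 / (2*PI) * rpow L p <= RInt F 0 (2 * PI) / (2 * PI)).
  { rewrite Hsplit. unfold Rdiv. rewrite (Rmult_comm t0), Rmult_assoc, (Rmult_comm (/ (2*PI))).
    apply Rmult_le_compat_r. left; apply Rinv_0_lt_compat; lra. lra. }
  eapply Rle_trans; [|apply rpow_le; [| exact Hle| apply Rdiv_lt_0_compat; lra]].
  2: { apply Rmult_le_pos. apply Rdiv_le_0_compat; lra. apply rpow_nonneg. }
  rewrite rpow_mult by (try apply Rdiv_le_0_compat; try apply rpow_nonneg; lra).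
  rewrite rpow_rpow by lra. rewrite rpow_pos_eq by (apply Rdiv_lt_0_compat; lra). lra.
Qed.

Lemma Phi_lower_pt K nu beta a M k0 t : 1 < K -> 0 < nu -> beta <= 0 -> nu + beta < 0 ->
  0 <= M -> (forall n, Cmod (a n) <= M) -> M / 2 <= Cmod (a k0) ->
  0 <= t <= delta K (S k0) ->
  M * Rpower (delta K (S k0)) (nu+beta) *
    (Rpower 4 beta / 2 - (Rpower (/K) (-(nu+beta)) / (1 - Rpower (/K) (-(nu+beta))) + Rpower (/K) nu / (1 - Rpower (/K) nu)))
  <= Cmod (Phi K nu beta a (Cmult (RtoC (1 - delta K (S k0))) (cis t))).
Proof.
  intros HK Hnu Hb Hg HM0 HM Hak0 Ht.
  set (d := delta K (S k0)) in *.
  assert (Hd : 0 < d) by (apply delta_pos; lra).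
  assert (Hd1 : d <= 1) by (apply delta_le1; lra).
  set (z := Cmult (RtoC (1 - d)) (cis t)).
  assert (Hz : Cmod z = 1 - d) by (apply Cmod_rcis; lra).
  assert (Hz1 : Cmod z < 1) by lra.
  assert (Ha : bounded_seq a) by (exists M; exact HM).
  set (q1 := Rpower (/K) nu). set (q2 := Rpower (/K) (-(nu+beta))).
  pose proof (q_lt1 K nu HK Hnu) as Hq1. pose proof (q_lt1 K (-(nu+beta)) HK ltac:(lra)) as Hq2.
  fold q1 in Hq1. fold q2 in Hq2.
  pose proof (term_series K nu beta a z HK Hnu Hb Ha Hz1) as HS.
  set (c := term K nu beta a z k0).
  pose proof (is_series_minus _ _ _ _ HS (is_series_single c k0)) as HR.
  set (y := Rpower d (nu + beta)).
  assert (Hy : 0 < y) by apply Rpower_pos.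
  assert (Hrest : Cmod (Cminus (Phi K nu beta a z) c) <= M * y * (q2/(1-q2)) + 0 + M * y * (q1/(1-q1))).
  { apply (series_norm_le2 _ _ _ HR). intros m.
    apply (GS _ _ _ _ _ k0); [apply Rmult_le_pos; lra| lra| lra| lra| | |].
    - intros k Hk. unfold single. destruct (Nat.eq_dec k k0) as [E|E]; [lia|].
      change (Cmod (Cminus (term K nu beta a z k) (RtoC 0)) <= M * y * q2 ^ (k0 - k)).
      replace (Cminus (term K nu beta a z k) (RtoC 0)) with (term K nu beta a z k) by ring.
      unfold term. rewrite Cmod_mult.
      pose proof (delta_pos K (S k) ltac:(lra)).
      assert (Hf : Cmod (fn K nu beta (S k) z) <= Rpower (delta K (S k)) nu * Rpower (delta K (S k) + d) beta).
      { apply Cmod_fn_le; [lra|lra|lra| |lra].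
        pose proof (Wz_radial (delta K (S k)) (1 - d) t ltac:(lra)). unfold Wz in H0. fold z in H0. lra. }
      pose proof (proj2 (term_bounds nu beta (delta K (S k)) d H Hd Hb)) as Hf2. fold y in Hf2.
      assert (E2 : delta K (S k) / d = / delta K (k0 - k)).
      { unfold d. replace (S k0) with (S k + (k0 - k))%nat by lia. rewrite delta_add by lra.
        pose proof (delta_pos K (k0 - k) ltac:(lra)). field. split; lra. }
      rewrite E2, Rp_inv, (Rpower_delta K (k0 - k)) in Hf2 by (try apply delta_pos; lra). fold q2 in Hf2.
      pose proof (HM k). pose proof (Cmod_ge_0 (a k)). pose proof (Cmod_ge_0 (fn K nu beta (S k) z)).
      replace (M * y * q2 ^ (k0 - k)) with (M * (y * q2 ^ (k0 - k))) by ring.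
      apply Rmult_le_compat; auto. lra.
    - unfold single. destruct (Nat.eq_dec k0 k0) as [_|E]; [|lia].
      change (Cmod (Cminus c c) <= 0). replace (Cminus c c) with (RtoC 0) by ring. rewrite Cmod_0. lra.
    - intros k Hk. unfold single. destruct (Nat.eq_dec k k0) as [E|E]; [lia|].
      change (Cmod (Cminus (term K nu beta a z k) (RtoC 0)) <= M * y * q1 ^ (k - k0)).
      replace (Cminus (term K nu beta a z k) (RtoC 0)) with (term K nu beta a z k) by ring.
      unfold term. rewrite Cmod_mult.
      pose proof (delta_pos K (S k) ltac:(lra)).
      assert (Hf : Cmod (fn K nu beta (S k) z) <= Rpower (delta K (S k)) nu * Rpower (delta K (S k) + d) beta).
      { apply Cmod_fn_le; [lra|lra|lra| |lra].
        pose proof (Wz_radial (delta K (S k)) (1 - d) t ltac:(lra)). unfold Wz in H0. fold z in H0. lra. }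
      pose proof (proj1 (term_bounds nu beta (delta K (S k)) d H Hd Hb)) as Hf2. fold y in Hf2.
      assert (E2 : delta K (S k) / d = delta K (k - k0)).
      { unfold d. replace (S k) with (S k0 + (k - k0))%nat by lia. rewrite delta_add by lra.
        field. pose proof (delta_pos K (S k0)). lra. }
      rewrite E2, (Rpower_delta K (k - k0)) in Hf2 by lra. fold q1 in Hf2.
      pose proof (HM k). pose proof (Cmod_ge_0 (a k)). pose proof (Cmod_ge_0 (fn K nu beta (S k) z)).
      replace (M * y * q1 ^ (k - k0)) with (M * (y * q1 ^ (k - k0))) by ring.
      apply Rmult_le_compat; auto. lra. }
  assert (Hc : M / 2 * (Rpower 4 beta * y) <= Cmod c).
  { unfold c, term. rewrite Cmod_mult.
    rewrite Cmod_fn by (try lra; pose proof (delta_pos K (S k0)); fold d; lra). fold d.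
    pose proof (Wz_radial d (1 - d) t ltac:(lra)) as Hrad.
    pose proof (Wz_upper d t ltac:(lra) ltac:(lra)) as Hup.
    unfold Wz in Hrad, Hup. fold z in Hrad, Hup.
    assert (Rpower (4 * d) beta <= Rpower (Cmod (Cminus (RtoC (1 + d)) z)) beta)
      by (apply Rpower_le_neg; lra).
    assert (E : Rpower d nu * Rpower (4 * d) beta = Rpower 4 beta * y).
    { unfold y. rewrite <- Rpower_mult_distr by lra. rewrite Rpower_plus. ring. }
    assert (0 <= M/2) by lra.
    assert (Rpower 4 beta * y <= Rpower d nu * Rpower (Cmod (Cminus (RtoC (1 + d)) z)) beta).
    { rewrite <- E. apply Rmult_le_compat_l. left; apply Rpower_pos. auto. }
    apply Rmult_le_compat; auto. apply Rmult_le_pos; left; apply Rpower_pos. }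
  pose proof (Cmod_triangle (Phi K nu beta a z) (Cminus c (Phi K nu beta a z))) as Htri.
  replace (Cplus (Phi K nu beta a z) (Cminus c (Phi K nu beta a z))) with c in Htri by ring.
  replace (Cminus c (Phi K nu beta a z)) with (Copp (Cminus (Phi K nu beta a z) c)) in Htri by ring.
  rewrite Cmod_opp in Htri. fold y.
  lra.
Qed.

Lemma linf_props (a : nat -> C) : bounded_seq a ->
  (forall n, Cmod (a n) <= linf_norm a) /\ 0 <= linf_norm a /\
  (0 < linf_norm a -> exists n, linf_norm a / 2 <= Cmod (a n)).
Proof.
  intros [M HM]. unfold linf_norm.
  set (E := fun x => exists n, x = Cmod (a n)).
  destruct (Lub_Rbar_correct E) as [Hub Hleast].
  assert (Hfin : is_finite (Lub_Rbar E)).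
  { assert (H1 : Rbar_le (Lub_Rbar E) M).
    { apply Hleast. intros x [n Hn]. subst. simpl. apply HM. }
    assert (H2 : Rbar_le (Cmod (a 0%nat)) (Lub_Rbar E)) by (apply Hub; exists 0%nat; reflexivity).
    destruct (Lub_Rbar E); simpl in *; try contradiction. reflexivity. }
  rewrite <- Hfin in Hub, Hleast.
  set (L := real (Lub_Rbar E)) in *.
  assert (Hn : forall n, Cmod (a n) <= L).
  { intros n. apply (Hub (Cmod (a n))). exists n; reflexivity. }
  split; auto. split. eapply Rle_trans. apply Cmod_ge_0. apply (Hn 0%nat).
  intros HL. apply NNPP. intros Hno.
  assert (Hub2 : is_ub_Rbar E (L/2)).
  { intros x [n Hx]. subst. simpl. apply Rnot_lt_le. intros Hc. apply Hno. exists n. lra. }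
  specialize (Hleast _ Hub2). simpl in Hleast. lra.
Qed.

Lemma Hnorm_le p alpha f B : (forall r, 0 <= r < 1 -> rpow (1 - r) alpha * Mp p r f <= B) ->
  Rbar_le (Hnorm p alpha f) B.
Proof.
  intros H. unfold Hnorm. destruct (Lub_Rbar_correct (fun x => exists r, 0 <= r < 1 /\ x = rpow (1 - r) alpha * Mp p r f)) as [_ Hl].
  apply Hl. intros x [r [Hr Hx]]. subst. simpl. apply H; auto.
Qed.

Lemma Hnorm_ge p alpha f r : 0 <= r < 1 -> Rbar_le (rpow (1 - r) alpha * Mp p r f) (Hnorm p alpha f).
Proof.
  intros Hr. unfold Hnorm. destruct (Lub_Rbar_correct (fun x => exists r, 0 <= r < 1 /\ x = rpow (1 - r) alpha * Mp p r f)) as [Hu _].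
  apply Hu. exists r. auto.
Qed.

Lemma Hnorm_finite p alpha f B : (forall r, 0 <= r < 1 -> rpow (1 - r) alpha * Mp p r f <= B) ->
  is_finite (Hnorm p alpha f).
Proof.
  intros H. pose proof (Hnorm_le p alpha f B H). pose proof (Hnorm_ge p alpha f 0 ltac:(lra)).
  destruct (Hnorm p alpha f); simpl in *; try contradiction. reflexivity.
Qed.

Lemma Mp_nonneg p r f : 0 <= Mp p r f.
Proof. unfold Mp. apply rpow_nonneg. Qed.

Lemma Mp_zero p r (f : C -> C) : 0 <= r < 1 -> (forall z, in_disk z -> f z = RtoC 0) -> Mp p r f = 0.
Proof.
  intros Hr Hf. unfold Mp.
  rewrite (RInt_ext _ (fun _ => 0)).
  - rewrite RInt_const. change (scal ?a ?b) with (a * b). rewrite Rmult_0_r, Rdiv_0_l. apply rpow_0.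
  - intros x _. rewrite Hf. rewrite Cmod_0. apply rpow_0.
    unfold in_disk. rewrite Cmod_rcis; lra.
Qed.

Lemma upper_bound p alpha beta nu K a : 0 < p -> 0 < alpha -> beta * p < -1 ->
  nu = - (alpha + beta + 1/p) -> 0 < nu -> 1 < K -> bounded_seq a ->
  forall r, 0 <= r < 1 -> rpow (1 - r) alpha * Mp p r (Phi K nu beta a) <=
    (Rpower 16 (-beta) * CS K nu beta * Rpower (/(PI * (alpha * p))) (1/p)) * linf_norm a.
Proof.
  intros Hp Hal Hbp Hnu Hnu0 HK Ha r Hr.
  destruct (linf_props a Ha) as [HM [HM0 _]].
  set (M := linf_norm a) in *.
  assert (Hb : beta < 0).
  { destruct (Rle_dec 0 beta); [|lra]. assert (0 <= beta * p) by (apply Rmult_le_pos; lra). lra. }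
  set (g := nu + beta).
  assert (Hg : g = - (alpha + 1/p)) by (unfold g; rewrite Hnu; ring).
  assert (Hg0 : g < 0) by (rewrite Hg; assert (0 < 1/p) by (apply Rdiv_lt_0_compat; lra); lra).
  assert (Hgp : g * p + 1 = - (alpha * p)) by (rewrite Hg; field; lra).
  assert (Hap : 0 < alpha * p) by nra.
  set (A := M * Rpower 16 (-beta) * CS K nu beta).
  assert (HA : 0 <= A).
  { unfold A. apply Rmult_le_pos. apply Rmult_le_pos. auto. left; apply Rpower_pos.
    left; apply CS_pos; auto. }
  pose proof PI_RGT_0 as HPI. pose proof PI_4.
  assert (HMp : Mp p r (Phi K nu beta a) <= A * Rpower (1 - r) (g + 1/p) * Rpower (/(PI * (-(g*p+1)))) (1/p)).
  { apply Mp_upper; auto.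
    - apply Phi_analytic; auto; lra.
    - lra.
    - intros t Ht. apply Phi_bound_gen; auto; try lra.
      rewrite Cmod_rcis; lra.
      intros n. pose proof (Wz_lower (delta K n) r t ltac:(split; [apply delta_pos; lra| apply delta_le1; lra]) Hr ltac:(lra)).
      unfold Wz in H0. lra.
    - intros t Ht. apply Phi_bound_gen; auto; try lra.
      rewrite Cmod_rcis; lra.
      intros n. pose proof (Wz_lower (delta K n) r (2*PI - t) ltac:(split; [apply delta_pos; lra| apply delta_le1; lra]) Hr ltac:(lra)).
      rewrite <- Wz_sym in H0. unfold Wz in H0. lra. }
  rewrite Hgp in HMp. replace (- - (alpha * p)) with (alpha * p) in HMp by ring.
  replace (g + 1/p) with (- alpha) in HMp by (rewrite Hg; ring).
  rewrite rpow_pos_eq by lra.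
  eapply Rle_trans. apply Rmult_le_compat_l. left; apply Rpower_pos. exact HMp.
  replace (Rpower (1 - r) alpha * (A * Rpower (1 - r) (- alpha) * Rpower (/ (PI * (alpha * p))) (1 / p)))
    with (A * Rpower (/ (PI * (alpha * p))) (1 / p) * (Rpower (1 - r) alpha * Rpower (1 - r) (- alpha))) by ring.
  rewrite <- Rpower_plus. replace (alpha + - alpha) with 0 by ring. rewrite Rpower_O by lra.
  unfold A. lra.
Qed.

Lemma qfrac_le q : 0 < q <= 1/2 -> q / (1 - q) <= 2 * q.
Proof. intros H. apply (Rmult_le_reg_r (1 - q)). lra. field_simplify; nra. Qed.

Lemma lower_bound p alpha beta nu K a : 0 < p -> 0 < alpha -> beta * p < -1 ->
  nu = - (alpha + beta + 1/p) -> 0 < nu -> 1 < K ->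
  Rpower (/K) nu <= Rpower 4 beta / 16 -> Rpower (/K) (-(nu+beta)) <= Rpower 4 beta / 16 ->
  bounded_seq a ->
  Rbar_le (Finite (Rpower (2*PI) (-(1/p)) * (Rpower 4 beta / 4) * linf_norm a)) (Hnorm p alpha (Phi K nu beta a)).
Proof.
  intros Hp Hal Hbp Hnu Hnu0 HK Hq1 Hq2 Ha.
  destruct (linf_props a Ha) as [HM [HM0 Hk0]].
  set (M := linf_norm a) in *.
  assert (Hb : beta < 0).
  { destruct (Rle_dec 0 beta); [|lra]. assert (0 <= beta * p) by (apply Rmult_le_pos; lra). lra. }
  assert (Hg : nu + beta = - (alpha + 1/p)) by (rewrite Hnu; ring).
  assert (H1p : 0 < 1/p) by (apply Rdiv_lt_0_compat; lra).
  pose proof PI_RGT_0 as HPI. pose proof PI2_3_2.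
  assert (H4 : Rpower 4 beta <= 1) by (apply Rp_le1'; lra).
  pose proof (Rpower_pos 4 beta) as H4p.
  pose proof (Rpower_pos (2*PI) (-(1/p))) as H2p.
  destruct (Req_dec M 0) as [E|E].
  - rewrite E, Rmult_0_r.
    eapply Rbar_le_trans; [|apply (Hnorm_ge p alpha _ 0); lra].
    simpl. apply Rmult_le_pos. apply rpow_nonneg. apply Mp_nonneg.
  - destruct (Hk0 ltac:(lra)) as [k0 Hak0].
    set (d := delta K (S k0)).
    assert (Hd : 0 < d) by (apply delta_pos; lra).
    assert (Hd1 : d <= 1) by (apply delta_le1; lra).
    set (q1 := Rpower (/K) nu) in *. set (q2 := Rpower (/K) (-(nu+beta))) in *.
    pose proof (q_lt1 K nu HK Hnu0) as Hq1'. pose proof (q_lt1 K (-(nu+beta)) HK ltac:(lra)) as Hq2'.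
    fold q1 in Hq1'. fold q2 in Hq2'.
    assert (Hfac : Rpower 4 beta / 4 <= Rpower 4 beta / 2 - (q2 / (1 - q2) + q1 / (1 - q1))).
    { pose proof (qfrac_le q1 ltac:(lra)). pose proof (qfrac_le q2 ltac:(lra)). lra. }
    set (y := Rpower d (nu + beta)).
    assert (Hy : 0 < y) by apply Rpower_pos.
    set (L := M * y * (Rpower 4 beta / 4)).
    assert (HL : 0 <= L) by (unfold L; apply Rmult_le_pos; [apply Rmult_le_pos|]; lra).
    assert (Hpt : forall t, 0 < t < d -> L <= Cmod (Phi K nu beta a (Cmult (RtoC (1 - d)) (cis t)))).
    { intros t Ht.
      pose proof (Phi_lower_pt K nu beta a M k0 t HK Hnu0 ltac:(lra) ltac:(lra) HM0 HM Hak0 ltac:(fold d; lra)) as HH.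
      fold d y q1 q2 in HH. eapply Rle_trans; [|exact HH]. unfold L. apply Rmult_le_compat_l. apply Rmult_le_pos; lra. exact Hfac. }
    assert (HMp := Mp_lower p (Phi K nu beta a) (1 - d) d L Hp ltac:(lra)
                     ltac:(apply Phi_analytic; auto; lra) ltac:(lra) HL Hpt).
    eapply Rbar_le_trans; [|apply (Hnorm_ge p alpha _ (1 - d)); lra].
    simpl. replace (1 - (1 - d)) with d by ring. rewrite rpow_pos_eq by lra.
    eapply Rle_trans; [|apply Rmult_le_compat_l; [left; apply Rpower_pos| exact HMp]].
    rewrite Rp_div by lra. unfold L, y.
    replace (Rpower d alpha * (Rpower d (1 / p) * Rpower (2 * PI) (- (1 / p)) * (M * Rpower d (nu + beta) * (Rpower 4 beta / 4))))
      with (Rpower (2 * PI) (- (1 / p)) * (Rpower 4 beta / 4) * M * (Rpower d alpha * Rpower d (1 / p) * Rpower d (nu + beta))) by ring.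
    rewrite <- !Rpower_plus. rewrite Hg. replace (alpha + 1 / p + - (alpha + 1 / p)) with 0 by ring.
    rewrite Rpower_O by lra. lra.
Qed.

Lemma bounded_comb (a b : nat -> C) (l m : C) : bounded_seq a -> bounded_seq b ->
  bounded_seq (fun n => Cplus (Cmult l (a n)) (Cmult m (b n))).
Proof.
  intros [Ma HMa] [Mb HMb]. exists (Cmod l * Ma + Cmod m * Mb). intros n.
  eapply Rle_trans. apply Cmod_triangle. rewrite !Cmod_mult.
  pose proof (Cmod_ge_0 l). pose proof (Cmod_ge_0 m).
  pose proof (HMa n). pose proof (HMb n).
  assert (Cmod l * Cmod (a n) <= Cmod l * Ma) by (apply Rmult_le_compat_l; auto).
  assert (Cmod m * Cmod (b n) <= Cmod m * Mb) by (apply Rmult_le_compat_l; auto).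
  lra.
Qed.

Lemma Phi_linear K nu beta (a b : nat -> C) (l m : C) z : 1 < K -> 0 < nu -> beta <= 0 ->
  bounded_seq a -> bounded_seq b -> in_disk z ->
  Phi K nu beta (fun n => Cplus (Cmult l (a n)) (Cmult m (b n))) z
  = Cplus (Cmult l (Phi K nu beta a z)) (Cmult m (Phi K nu beta b z)).
Proof.
  intros HK Hnu Hb Ha Hbb Hz.
  pose proof (term_series K nu beta a z HK Hnu Hb Ha Hz) as H1.
  pose proof (term_series K nu beta b z HK Hnu Hb Hbb Hz) as H2.
  pose proof (is_series_scal_l (K:=C_AbsRing) (V:=C_NormedModule) l _ _ H1) as H1'.
  pose proof (is_series_scal_l (K:=C_AbsRing) (V:=C_NormedModule) m _ _ H2) as H2'.
  pose proof (is_series_plus _ _ _ _ H1' H2') as H3.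
  unfold Phi at 1. apply is_series_C_pair.
  eapply is_series_ext; [|exact H3].
  intros n. unfold term. change (plus (scal l (Cmult (a n) (fn K nu beta (S n) z))) (scal m (Cmult (b n) (fn K nu beta (S n) z))))
    with (Cplus (Cmult l (Cmult (a n) (fn K nu beta (S n) z))) (Cmult m (Cmult (b n) (fn K nu beta (S n) z)))).
  match goal with |- ?x = ?y => change (@eq C x y) end. ring.
Qed.

Theorem proposition6p7 (p alpha beta : R) :
  0 < p -> 0 < alpha -> beta * p < -1 -> 0 < - (alpha + beta + 1 / p) ->
  let nu := - (alpha + beta + 1 / p) in
  exists K0 : R, 1 < K0 /\ forall K : R, K0 < K ->
    (forall a, bounded_seq a -> forall z, in_disk z ->
       @ex_series C_AbsRing C_NormedModule (term K nu beta a z)) /\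
    (forall a, bounded_seq a -> in_H p alpha (Phi K nu beta a)) /\
    (forall a b (l m : C), bounded_seq a -> bounded_seq b -> forall z, in_disk z ->
       Phi K nu beta (fun n => Cplus (Cmult l (a n)) (Cmult m (b n))) z
       = Cplus (Cmult l (Phi K nu beta a z)) (Cmult m (Phi K nu beta b z))) /\
    (forall a b, bounded_seq a -> bounded_seq b ->
       (forall z, in_disk z -> Phi K nu beta a z = Phi K nu beta b z) ->
       forall n, a n = b n) /\
    (exists c C0 : R, 0 < c /\ 0 < C0 /\
       forall a, bounded_seq a ->
         Rbar_le (Finite (c * linf_norm a)) (Hnorm p alpha (Phi K nu beta a)) /\
         Rbar_le (Hnorm p alpha (Phi K nu beta a)) (Finite (C0 * linf_norm a))).
Proof.
  intros Hp Hal Hbp Hnu0 nu.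
  assert (Hnu : nu = - (alpha + beta + 1/p)) by reflexivity.
  clearbody nu.
  assert (Hnup : 0 < nu) by (rewrite Hnu; exact Hnu0).
  assert (Hb : beta < 0).
  { destruct (Rle_dec 0 beta); [|lra]. assert (0 <= beta * p) by (apply Rmult_le_pos; lra). lra. }
  assert (H1p : 0 < 1/p) by (apply Rdiv_lt_0_compat; lra).
  assert (Hg : nu + beta < 0) by (rewrite Hnu; lra).
  set (eta := Rpower 4 beta / 16).
  assert (Heta : 0 < eta) by (unfold eta; pose proof (Rpower_pos 4 beta); lra).
  set (K1 := Rpower eta (-(1/nu))). set (K2 := Rpower eta (1/(nu+beta))).
  assert (HK1 : 0 < K1) by apply Rpower_pos. assert (HK2 : 0 < K2) by apply Rpower_pos.
  exists (2 + K1 + K2). split. lra.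
  intros K HK.
  assert (HK' : 1 < K) by lra.
  assert (Hq1 : Rpower (/K) nu <= eta).
  { rewrite Rp_inv by lra. eapply Rle_trans. apply (Rpower_le_neg K1 K (-nu)); lra.
    unfold K1. rewrite Rpower_mult. replace (- (1 / nu) * - nu) with 1 by (field; lra).
    rewrite Rpower_1 by lra. lra. }
  assert (Hq2 : Rpower (/K) (-(nu+beta)) <= eta).
  { rewrite Rp_inv by lra. replace (- - (nu + beta)) with (nu + beta) by ring.
    eapply Rle_trans. apply (Rpower_le_neg K2 K (nu + beta)); lra.
    unfold K2. rewrite Rpower_mult. replace (1 / (nu + beta) * (nu + beta)) with 1 by (field; lra).
    rewrite Rpower_1 by lra. lra. }
  assert (Hlow : forall a, bounded_seq a ->
    Rbar_le (Finite (Rpower (2*PI) (-(1/p)) * (Rpower 4 beta / 4) * linf_norm a)) (Hnorm p alpha (Phi K nu beta a)))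
.
  { intros a Ha. apply (lower_bound p alpha beta nu K a Hp Hal Hbp Hnu ltac:(rewrite Hnu; exact Hnu0) HK' Hq1 Hq2 Ha). }
  assert (Hup : forall a, bounded_seq a -> forall r, 0 <= r < 1 -> rpow (1 - r) alpha * Mp p r (Phi K nu beta a) <=
    (Rpower 16 (-beta) * CS K nu beta * Rpower (/(PI * (alpha * p))) (1/p)) * linf_norm a)
.
  { intros a Ha. apply (upper_bound p alpha beta nu K a Hp Hal Hbp Hnu ltac:(rewrite Hnu; exact Hnu0) HK' Ha). }
  assert (Hc : 0 < Rpower (2*PI) (-(1/p)) * (Rpower 4 beta / 4)).
  { apply Rmult_lt_0_compat. apply Rpower_pos. pose proof (Rpower_pos 4 beta). lra. }
  assert (HC0 : 0 < Rpower 16 (-beta) * CS K nu beta * Rpower (/(PI * (alpha * p))) (1/p)).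
  { apply Rmult_lt_0_compat. apply Rmult_lt_0_compat. apply Rpower_pos. apply CS_pos; auto; lra. apply Rpower_pos. }
  split; [|split; [|split; [|split]]].
  - intros a Ha z Hz. eexists. apply (term_series K nu beta a z HK' ltac:(lra) ltac:(lra) Ha Hz).
  - intros a Ha. split. apply Phi_analytic; auto; lra.
    apply (Hnorm_finite _ _ _ _ (Hup a Ha)).
  - intros a b l m Ha Hbb z Hz. apply Phi_linear; auto; lra.
  - intros a b Ha Hbb Heq n.
    set (dd := fun n => Cplus (Cmult (RtoC 1) (a n)) (Cmult (RtoC (-1)) (b n))).
    assert (Hd : bounded_seq dd) by (apply bounded_comb; auto).
    assert (HZ : forall z, in_disk z -> Phi K nu beta dd z = RtoC 0).
    { intros z Hz. unfold dd. rewrite Phi_linear by (auto; lra). rewrite (Heq z Hz). ring. }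
    assert (HH : Rbar_le (Hnorm p alpha (Phi K nu beta dd)) 0).
    { apply Hnorm_le. intros r Hr. rewrite Mp_zero by auto. lra. }
    pose proof (Rbar_le_trans _ _ _ (Hlow dd Hd) HH) as HL. simpl in HL.
    destruct (linf_props dd Hd) as [Hn [H0 _]].
    assert (linf_norm dd <= 0).
    { apply (Rmult_le_reg_l (Rpower (2*PI) (-(1/p)) * (Rpower 4 beta / 4))). exact Hc. lra. }
    assert (E : dd n = RtoC 0) by (apply Cmod_eq_0; pose proof (Hn n); pose proof (Cmod_ge_0 (dd n)); lra).
    unfold dd in E.
    replace (a n) with (Cplus (Cplus (Cmult (RtoC 1) (a n)) (Cmult (RtoC (-1)) (b n))) (b n)) by ring.
    rewrite E. ring.
  - exists (Rpower (2*PI) (-(1/p)) * (Rpower 4 beta / 4)), (Rpower 16 (-beta) * CS K nu beta * Rpower (/(PI * (alpha * p))) (1/p)).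
    split; auto. split; auto. intros a Ha. split. apply Hlow; auto.
    apply Hnorm_le. apply Hup. auto.
Qed.
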